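(* Fix $k\in\{1,2,\dots\}\cup\{\infty\}$. For $a>0$ let $\mathcal{S}_a$ be the $C^k$-structure on $\mathbb{L}$ given by the special minimal atlas of $w_a$. Then: (1) If $a=1$ (so $w_1=\mathrm{id}_{\mathbb{R}}$), there is a group isomorphism $\eta\colon \mathrm{Diff}(\mathcal{S}_1)\to D^k(\mathbb{R},0)\times\mathbb{Z}_2$ (with $\mathbb{Z}_2=\{\pm1\}$) such that for $*\in\{+,-\}$: $\eta(\mathrm{Diff}^{*,\mathrm{fix}}(\mathcal{S}_1))=D^{k,*}(\mathbb{R},0)\times\{1\}$ and $\eta(\mathrm{Diff}^{*,\mathrm{ex}}(\mathcal{S}_1))=D^{k,*}(\mathbb{R},0)\times\{-1\}$. (2) If $a\neq1$, then $\mathrm{Diff}^{+,\mathrm{ex}}(\mathcal{S}_a)=\mathrm{Diff}^{-,\mathrm{fix}}(\mathcal{S}_a)=\varnothing$ and $\mathrm{Diff}(\mathcal{S}_a)=\mathrm{Diff}^{+,\mathrm{fix}}(\mathcal{S}_a)\sqcup\mathrm{Diff}^{-,\mathrm{ex}}(\mathcal{S}_a)$. Moreover there is a group isomorphism $\mathrm{Diff}^{+,\mathrm{fix}}(\mathcal{S}_a)\cong E^{k,+}(\mathbb{R},0)$, and there exists an element $p\in\mathrm{Diff}^{-,\mathrm{ex}}(\mathcal{S}_a)$ of order $2$; hence $\mathrm{Diff}(\mathcal{S}_a)$ splits as a semidirect product $\mathrm{Diff}^{+,\mathrm{fix}}(\mathcal{S}_a)\rtimes\langle p\rangle$, and so is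 isomorphic to some semidirect product $E^{k,+}(\mathbb{R},0)\rtimes\mathbb{Z}_2$. (3) If $a\neq 1$, then $\mathcal{S}_a$ and $\mathcal{S}_{1/a}$ are $C^k$-diffeomorphic; more precisely $\mathrm{Diff}^{+,\mathrm{fix}}(\mathcal{S}_a,\mathcal{S}_{1/a})=\mathrm{Diff}^{-,\mathrm{ex}}(\mathcal{S}_a,\mathcal{S}_{1/a})=\varnothing$, $\mathrm{Diff}(\mathcal{S}_a,\mathcal{S}_{1/a})=\mathrm{Diff}^{+,\mathrm{ex}}(\mathcal{S}_a,\mathcal{S}_{1/a})\sqcup\mathrm{Diff}^{-,\mathrm{fix}}(\mathcal{S}_a,\mathcal{S}_{1/a})$, and for every $h\in\mathrm{Diff}^{-,\mathrm{fix}}(\mathcal{S}_a,\mathcal{S}_{1/a})$ and $g\in\mathrm{Diff}^{+,\mathrm{ex}}(\mathcal{S}_a,\mathcal{S}_{1/a})$ the maps $\kappa\mapsto g^{-1}\circ\kappa$ and $\kappa\mapsto h\circ\kappa$ are bijections $\mathrm{Diff}^{+,\mathrm{ex}}(\mathcal{S}_a,\mathcal{S}_{1/a})\to\mathrm{Diff}^{+,\mathrm{fix}}(\mathcal{S}_a)$ and $\mathrm{Diff}^{+,\mathrm{fix}}(\mathcal{S}_a)\to\mathrm{Diff}^{-,\mathrm{fix}}(\mathcal{S}_a,\mathcal{S}_{1/a})$ respectively. (4) If $a,b>0$ with $a\neq b$ and $a\neq 1/b$, then $\mathrm{Diff}(\mathcal{S}_a,\mathcal{S}_b)=\varnothing$.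 In particular, $\mathbb{L}$ has uncountably many pairwise non-diffeomorphic $C^k$-structures.
   Context: $\mathbb{L}=\mathbb{R}\sqcup\{0'\}$ is the line with two origins: its open sets are the open subsets of $\mathbb{R}$ and the sets $(W\setminus\{0\})\cup\{0'\}$ with $W\subset\mathbb{R}$ open, $0\in W$. Put $U=\mathbb{L}\setminus\{0'\}=\mathbb{R}$, $V=\mathbb{L}\setminus\{0\}$. $C^k$-atlases, $C^k$-structures (equivalence classes of atlases whose union is again a $C^k$-atlas) and $C^k$-diffeomorphisms between structures on $\mathbb{L}$ are defined via charts (homeomorphisms of open subsets of $\mathbb{L}$ onto open subsets of $\mathbb{R}$) as for manifolds. Every homeomorphism of $\mathbb{L}$ either fixes both $0,0'$ or exchanges them, and maps $\mathbb{R}\setminus\{0\}$ onto itself; it preserves (reverses) orientation if its restriction to $\mathbb{R}\setminus\{0\}$ is increasing (decreasing). For structures $\mathcal{S},\mathcal{T}$: $\mathrm{Diff}(\mathcal{S},\mathcal{T})$ is the set of $C^k$-diffeomorphisms $(\mathbb{L},\mathcal{S})\to(\mathbb{L},\mathcal{T})$; $\mathrm{Diff}^{*,\bullet}(\mathcal{S},\mathcal{T})$, $*\in\{+,-\}$, $\bullet\in\{\mathrm{fix},\mathrm{ex}\}$, the subset of those preserving ($+$) / reversing ($-$) orientation and fixing ($\mathrm{fix}$) / exchanging ($\mathrm{ex}$) $0$ and $0'$; $\mathrm{Diff}(\mathcal{S})=\mathrm{Diff}(\mathcal{S},\mathcal{S})$ etc. $H^k(\mathbb{R},0)$: homeomorphisms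 $h$ of $\mathbb{R}$ with $h(0)=0$ restricting to a $C^k$-diffeomorphism of $\mathbb{R}\setminus\{0\}$. $D^k(\mathbb{R},0)$: $C^k$-diffeomorphisms of $\mathbb{R}$ fixing $0$; $D^{k,+}$, $D^{k,-}$ its orientation preserving / reversing elements. $E^{k,+}(\mathbb{R},0)$: orientation preserving $h\in D^k(\mathbb{R},0)$ with $h^{(i)}(0)=0$ for all integers $2\le i\le k$ (all $i\ge2$ if $k=\infty$). Let $\mathrm{id}_U\colon U\to\mathbb{R}$ be the identity and $\mathrm{id}_V\colon V\to\mathbb{R}$ be $\mathrm{id}_V(0')=0$, $\mathrm{id}_V(x)=x$ for $x\ne0'$. For $h\in H^k(\mathbb{R},0)$ the special minimal atlas of $h$ is the $C^k$-atlas $\{(U,\mathrm{id}_U),(V,h\circ\mathrm{id}_V)\}$. For $a>0$, $w_a\in H^k(\mathbb{R},0)$ is $w_a(x)=x$ for $x\le0$ and $w_a(x)=ax$ for $x>0$. *)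

(* Defs.v *)
From Stdlib Require Import Reals ZArith.
From Coquelicot Require Import Coquelicot.
Open Scope R_scope.

Inductive reg := Fin (n : nat) | Inf.

Definition valid_reg (k : reg) : Prop :=
  match k with Fin n => (1 <= n)%nat | Inf => True end.

Definition le_reg (i : nat) (k : reg) : Prop :=
  match k with Fin n => (i <= n)%nat | Inf => True end.

Definition CnOn (n : nat) (f : R -> R) (O : R -> Prop) : Prop :=
  forall x, O x ->
    (forall m, (m <= n)%nat -> ex_derive_n f m x) /\
    continuous (Derive_n f n) x.

Definition CkOn (k : reg) (f : R -> R) (O : R -> Prop) : Prop :=
  match k with
  | Fin n => CnOn n f O
  | Inf => forall n, CnOn n f O
  end.

Inductive L := Pt (x : R) | Orig2.   (* Pt 0 = 0, Orig2 = 0' *)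

(** id_U on U = L \ {0'}, id_V on V = L \ {0}; both are this map on
    their respective domains. *)
Definition val (p : L) : R := match p with Pt x => x | Orig2 => 0 end.

(** Quotient topology (the opens listed in the paper form a basis):
    U is open iff its traces on U = R and on V (identified with R) are open. *)
Definition open_L (U : L -> Prop) : Prop :=
  open (fun x : R => U (Pt x)) /\
  open (fun x : R => U (if Req_EM_T x 0 then Orig2 else Pt x)).

Definition continuous_L (f : L -> L) : Prop :=
  forall U, open_L U -> open_L (fun p => U (f p)).

Record chart := mkChart { dom : L -> Prop; cmap : L -> R }.

Definition image (c : chart) (P : L -> Prop) : R -> Prop :=
  fun y => exists p, dom c p /\ P p /\ cmap c p = y.

Definition is_chart (c : chart) : Prop :=
  open_L (dom c) /\
  (forall p q, dom c p -> dom c q -> cmap c p = cmap c q -> p = q) /\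
  open (image c (fun _ => True)) /\
  (forall O : R -> Prop, open O -> open_L (fun p => dom c p /\ O (cmap c p))) /\
  (forall V, open_L V -> (forall p, V p -> dom c p) -> open (image c V)).

Definition compat (k : reg) (c d : chart) : Prop :=
  exists F : R -> R,
    (forall p, dom c p -> dom d p -> cmap d p = F (cmap c p)) /\
    CkOn k F (image c (dom d)).

Definition is_atlas (k : reg) (A : chart -> Prop) : Prop :=
  (forall c, A c -> is_chart c) /\
  (forall p, exists c, A c /\ dom c p) /\
  (forall c d, A c -> A d -> compat k c d).

(** The C^k-structure determined by an atlas, represented by its maximal
    atlas (= union of all atlases in the equivalence class). *)
Definition structure_of (k : reg) (A : chart -> Prop) : chart -> Prop :=
  fun c => is_chart c /\ forall d, A d -> compat k c d /\ compat k d c.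

Definition is_structure (k : reg) (S : chart -> Prop) : Prop :=
  exists A, is_atlas k A /\ forall c, S c <-> structure_of k A c.

Definition Ck_map (k : reg) (S T : chart -> Prop) (f : L -> L) : Prop :=
  continuous_L f /\
  forall c d, S c -> T d ->
    exists F : R -> R,
      (forall p, dom c p -> dom d (f p) -> cmap d (f p) = F (cmap c p)) /\
      CkOn k F (image c (fun p => dom d (f p))).

Definition Diff (k : reg) (S T : chart -> Prop) (f : L -> L) : Prop :=
  exists g : L -> L,
    (forall p, g (f p) = p) /\ (forall p, f (g p) = p) /\
    Ck_map k S T f /\ Ck_map k T S g.

(** orientation (restriction to R \ {0}, which f maps onto itself) *)
Definition orient_pres (f : L -> L) : Prop :=
  forall x y, x <> 0 -> y <> 0 -> x < y -> val (f (Pt x)) < val (f (Pt y)).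
Definition orient_rev (f : L -> L) : Prop :=
  forall x y, x <> 0 -> y <> 0 -> x < y -> val (f (Pt y)) < val (f (Pt x)).

Definition fixes0 (f : L -> L) : Prop := f (Pt 0) = Pt 0 /\ f Orig2 = Orig2.
Definition exch0 (f : L -> L) : Prop := f (Pt 0) = Orig2 /\ f Orig2 = Pt 0.

Inductive sgn := Plus | Minus.
Inductive kind := Fix | Ex.

Definition orient (s : sgn) f :=
  match s with Plus => orient_pres f | Minus => orient_rev f end.
Definition behaviour (b : kind) f :=
  match b with Fix => fixes0 f | Ex => exch0 f end.

Definition DiffSB (k : reg) (S T : chart -> Prop) (s : sgn) (b : kind)
  (f : L -> L) : Prop :=
  Diff k S T f /\ orient s f /\ behaviour b f.

Definition Dk (k : reg) (h : R -> R) : Prop :=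
  h 0 = 0 /\
  exists hinv : R -> R,
    (forall x, hinv (h x) = x) /\ (forall x, h (hinv x) = x) /\
    CkOn k h (fun _ => True) /\ CkOn k hinv (fun _ => True).

Definition Dks (k : reg) (s : sgn) (h : R -> R) : Prop :=
  Dk k h /\
  match s with
  | Plus => forall x y, x < y -> h x < h y
  | Minus => forall x y, x < y -> h y < h x
  end.

Definition Ekp (k : reg) (h : R -> R) : Prop :=
  Dks k Plus h /\
  forall i : nat, (2 <= i)%nat -> le_reg i k -> Derive_n h i 0 = 0.

Definition w (a : R) (x : R) : R := if Rle_dec x 0 then x else a * x.

Definition chartU : chart := mkChart (fun p => p <> Orig2) val.
Definition chartV (h : R -> R) : chart :=
  mkChart (fun p => p <> Pt 0) (fun p => h (val p)).

Definition special_atlas (h : R -> R) : chart -> Prop :=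
  fun c => c = chartU \/ c = chartV h.

Definition Sa (k : reg) (a : R) : chart -> Prop :=
  structure_of k (special_atlas (w a)).

Definition compL (f g : L -> L) : L -> L := fun p => f (g p).
Definition compR (f g : R -> R) : R -> R := fun x => f (g x).

Definition bij_between {A B : Type} (F : A -> B) (P : A -> Prop) (Q : B -> Prop)
  : Prop :=
  (forall x, P x -> Q (F x)) /\
  (forall x y, P x -> P y -> F x = F y -> x = y) /\
  (forall y, Q y -> exists x, P x /\ F x = y).

Definition pm1 (s : Z) : Prop := s = 1%Z \/ s = (-1)%Z.

(* Main.v *)
Require Import Defs.
From Stdlib Require Import Reals ZArith Lia Lra FunctionalExtensionality Classical ClassicalEpsilon.
From Coquelicot Require Import Coquelicot.
Open Scope R_scope.

Lemma Derive_n_D (f : R -> R) (m : nat) : Derive_n (Derive f) m = Derive_n f (S m).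
Proof.
  apply functional_extensionality; intro x.
  rewrite <- Nat.add_1_r. exact (Derive_n_comp f m 1 x).
Qed.

Lemma CnOn_loc (n : nat) (F : R -> R) (O : R -> Prop) :
  (forall x, O x -> exists N G, open N /\ N x /\ CnOn n G N /\ forall y, N y -> F y = G y) ->
  CnOn n F O.
Proof.
  intros H x Ox. destruct (H x Ox) as [N [G [oN [Nx [CG EG]]]]].
  destruct (CG x Nx) as [D C].
  assert (loc: forall y, N y -> locally y (fun t => G t = F t)).
  { intros y Ny. apply (locally_open N); auto. intros; symmetry; auto. }
  split.
  - intros m Hm. apply ex_derive_n_ext_loc with G; auto.
  - apply continuous_ext_loc with (Derive_n G n); auto.
    apply (locally_open N); auto. intros y Ny. apply Derive_n_ext_loc; auto.
Qed.

Lemma CnOn_ext (n : nat) (F G : R -> R) (O : R -> Prop) :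
  open O -> CnOn n G O -> (forall y, O y -> F y = G y) -> CnOn n F O.
Proof.
  intros oO CG E. apply CnOn_loc. intros x Ox. exists O, G. auto.
Qed.

Lemma CnOn_sub n f (O O' : R -> Prop) : (forall x, O' x -> O x) -> CnOn n f O -> CnOn n f O'.
Proof. intros S C x Ox. apply C; auto. Qed.

Lemma CnOn_le m n f O : (m <= n)%nat -> CnOn n f O -> CnOn m f O.
Proof.
  intros Hmn C x Ox. destruct (C x Ox) as [D Cn]. split.
  - intros j Hj. apply D; lia.
  - destruct (Nat.eq_dec m n) as [->|ne]; auto.
    apply (ex_derive_continuous (Derive_n f m)). apply (D (S m)). lia.
Qed.

Lemma CnOn_S_elim n f O : CnOn (S n) f O ->
  (forall x, O x -> ex_derive f x) /\ CnOn n (Derive f) O.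
Proof.
  intros C. split.
  - intros x Ox. destruct (C x Ox) as [D _]. exact (D 1%nat ltac:(lia)).
  - intros x Ox. destruct (C x Ox) as [D Cn]. split.
    + intros [|m] Hm; simpl; auto. rewrite Derive_n_D. apply (D (S (S m))). lia.
    + rewrite Derive_n_D. exact Cn.
Qed.

Lemma CnOn_S_intro n f (O : R -> Prop) : open O ->
  (forall x, O x -> ex_derive f x) -> CnOn n (Derive f) O -> CnOn (S n) f O.
Proof.
  intros oO E C x Ox. destruct (C x Ox) as [D Cn]. split.
  - intros [|m] Hm; simpl; auto. destruct m as [|m]. simpl. apply ex_derive_ext with f; auto.
    assert (H := D (S m) ltac:(lia)). simpl in H. rewrite Derive_n_D in H. exact H.
  - rewrite Derive_n_D in Cn. exact Cn.
Qed.

Lemma CnOn_S_intro' n f G (O : R -> Prop) : open O ->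
  (forall x, O x -> ex_derive f x) -> CnOn n G O -> (forall x, O x -> Derive f x = G x) ->
  CnOn (S n) f O.
Proof.
  intros oO E C EG. apply CnOn_S_intro; auto. apply CnOn_ext with G; auto.
Qed.

Lemma CnOn_0 f (O : R -> Prop) : (forall x, O x -> continuous f x) -> CnOn 0 f O.
Proof.
  intros H x Ox. split.
  - intros [|m] Hm; simpl; auto; lia.
  - simpl. apply H; auto.
Qed.

Lemma CnOn_cont n f (O : R -> Prop) x : CnOn n f O -> O x -> continuous f x.
Proof. intros C Ox. apply (CnOn_le 0 n) in C; [|lia]. destruct (C x Ox) as [_ H]. exact H. Qed.

Lemma CnOn_ex_derive n f (O : R -> Prop) x : CnOn (S n) f O -> O x -> ex_derive f x.
Proof. intros C Ox. destruct (C x Ox) as [D _]. exact (D 1%nat ltac:(lia)). Qed.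

Lemma CnOn_const n c (O : R -> Prop) : open O -> CnOn n (fun _ => c) O.
Proof.
  intros oO. revert c. induction n; intros c.
  - apply CnOn_0. intros; apply continuous_const.
  - apply CnOn_S_intro' with (fun _ => 0); auto.
    + intros; apply ex_derive_const.
    + intros; apply Derive_const.
Qed.

Lemma CnOn_id n (O : R -> Prop) : open O -> CnOn n (fun x => x) O.
Proof.
  intros oO. destruct n.
  - apply CnOn_0. intros; apply continuous_id.
  - apply CnOn_S_intro' with (fun _ => 1); auto.
    + intros; apply ex_derive_id.
    + apply CnOn_const; auto.
    + intros; apply Derive_id.
Qed.

Lemma CnOn_plus n f g (O : R -> Prop) : open O -> CnOn n f O -> CnOn n g O ->
  CnOn n (fun x => f x + g x) O.
Proof.
  intros oO. revert f g. induction n; intros f g Cf Cg.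
  - apply CnOn_0. intros x Ox. apply (continuous_plus f g);
      eapply CnOn_cont; eauto.
  - apply CnOn_S_elim in Cf as [Ef Cf]. apply CnOn_S_elim in Cg as [Eg Cg].
    apply CnOn_S_intro' with (fun x => Derive f x + Derive g x); auto.
    + intros x Ox. apply (ex_derive_plus f g); auto.
    + intros x Ox. apply Derive_plus; auto.
Qed.

Lemma CnOn_mult n f g (O : R -> Prop) : open O -> CnOn n f O -> CnOn n g O ->
  CnOn n (fun x => f x * g x) O.
Proof.
  intros oO. revert f g. induction n; intros f g Cf Cg.
  - apply CnOn_0. intros x Ox. apply (continuous_mult f g);
      eapply CnOn_cont; eauto.
  - assert (Cf' := CnOn_le n (S n) f O ltac:(lia) Cf).
    assert (Cg' := CnOn_le n (S n) g O ltac:(lia) Cg).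
    apply CnOn_S_elim in Cf as [Ef Cf]. apply CnOn_S_elim in Cg as [Eg Cg].
    apply CnOn_S_intro' with (fun x => Derive f x * g x + f x * Derive g x); auto.
    + intros x Ox. apply ex_derive_mult; auto.
    + apply CnOn_plus; auto.
    + intros x Ox. apply Derive_mult; auto.
Qed.

Lemma CnOn_scal n c f (O : R -> Prop) : open O -> CnOn n f O -> CnOn n (fun x => c * f x) O.
Proof. intros oO C. apply (CnOn_mult n (fun _ => c) f); auto. apply CnOn_const; auto. Qed.

Lemma CnOn_comp n g f (O O' : R -> Prop) : open O -> open O' ->
  CnOn n g O' -> CnOn n f O -> (forall x, O x -> O' (f x)) ->
  CnOn n (fun x => g (f x)) O.
Proof.
  intros oO oO'. revert g f. induction n; intros g f Cg Cf M.
  - apply CnOn_0. intros x Ox. apply continuous_comp.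
    eapply CnOn_cont; eauto. eapply CnOn_cont; eauto.
  - assert (Cf' := CnOn_le n (S n) f O ltac:(lia) Cf).
    apply CnOn_S_elim in Cf as [Ef Cf]. apply CnOn_S_elim in Cg as [Eg Cg].
    apply CnOn_S_intro' with (fun x => Derive f x * Derive g (f x)); auto.
    + intros x Ox. apply ex_derive_comp; auto.
    + apply CnOn_mult; auto.
    + intros x Ox. apply Derive_comp; auto.
Qed.

Lemma CnOn_inv n f (O : R -> Prop) : open O -> CnOn n f O -> (forall x, O x -> f x <> 0) ->
  CnOn n (fun x => / f x) O.
Proof.
  intros oO. revert f. induction n; intros f Cf Nz.
  - apply CnOn_0. intros x Ox.
    apply continuous_comp. eapply CnOn_cont; eauto.
    apply continuity_pt_filterlim. apply continuity_pt_inv; auto.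
    apply continuity_pt_id.
  - assert (Cf' := CnOn_le n (S n) f O ltac:(lia) Cf).
    apply CnOn_S_elim in Cf as [Ef Cf].
    apply CnOn_S_intro' with (fun x => (-1) * (Derive f x * (/ f x * / f x))); auto.
    + intros x Ox. apply ex_derive_inv; auto.
    + apply CnOn_scal; auto. apply CnOn_mult; auto. apply CnOn_mult; auto.
    + intros x Ox. rewrite Derive_inv; auto. field. auto.
Qed.

Lemma ball_R (x e y : R) : ball x e y <-> Rabs (y - x) < e.
Proof. unfold ball; simpl; unfold AbsRing_ball, abs, minus, plus, opp; simpl. tauto. Qed.

Lemma locally_R (x : R) (P : R -> Prop) :
  locally x P <-> exists e, 0 < e /\ forall y, Rabs (y - x) < e -> P y.
Proof.
  split.
  - intros [e H]. exists e. split. apply cond_pos. intros y Hy. apply H. apply ball_R; auto.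
  - intros [e [He H]]. exists (mkposreal e He). intros y Hy. apply H. apply ball_R in Hy; auto.
Qed.

Lemma open_R (O : R -> Prop) :
  (forall x, O x -> exists e, 0 < e /\ forall y, Rabs (y - x) < e -> O y) -> open O.
Proof. intros H x Ox. apply locally_R. auto. Qed.

Lemma open_full : open (fun _ : R => True).
Proof. apply open_R. intros. exists 1; split; auto; lra. Qed.

Lemma open_lt0 : open (fun x : R => x < 0).
Proof.
  apply open_R. intros x Hx. exists (-x). split; [lra|].
  intros y Hy. apply Rabs_def2 in Hy. lra.
Qed.

Lemma open_gt0 : open (fun x : R => 0 < x).
Proof.
  apply open_R. intros x Hx. exists x. split; [lra|].
  intros y Hy. apply Rabs_def2 in Hy. lra.
Qed.

Lemma open_neq0 : open (fun x : R => x <> 0).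
Proof.
  apply open_R. intros x Hx. exists (Rabs x). split. apply Rabs_pos_lt; auto.
  intros y Hy Hy0. subst. rewrite Rminus_0_l, Rabs_Ropp in Hy. lra.
Qed.

Lemma locally_lt0 x : x < 0 -> locally x (fun y => y < 0).
Proof. intros. apply (locally_open _ _ open_lt0); auto. Qed.
Lemma locally_gt0 x : 0 < x -> locally x (fun y => 0 < y).
Proof. intros. apply (locally_open _ _ open_gt0); auto. Qed.

Lemma one_side_left (A B : R -> R) :
  continuous A 0 -> continuous B 0 -> (forall x, x < 0 -> A x = B x) -> A 0 = B 0.
Proof.
  intros CA CB E. destruct (Req_dec (A 0) (B 0)) as [e|ne]; auto. exfalso.
  set (d := Rabs (A 0 - B 0)). assert (Hd : 0 < d) by (apply Rabs_pos_lt; lra).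
  assert (CA' := proj1 (filterlim_locally (F:=locally 0) A (A 0)) CA).
  assert (CB' := proj1 (filterlim_locally (F:=locally 0) B (B 0)) CB).
  clear CA CB. rename CA' into CA. rename CB' into CB.
  specialize (CA (mkposreal (d/2) ltac:(lra))). specialize (CB (mkposreal (d/2) ltac:(lra))).
  apply locally_R in CA as [e1 [He1 H1]]. apply locally_R in CB as [e2 [He2 H2]].
  assert (Hm : 0 < Rmin e1 e2) by (apply Rmin_pos; auto).
  assert (Rmin e1 e2 <= e1) by apply Rmin_l. assert (Rmin e1 e2 <= e2) by apply Rmin_r.
  set (x := - Rmin e1 e2 / 2).
  assert (Hx : x < 0) by (unfold x; lra).
  assert (Hx1 : Rabs (x - 0) < e1).
  { rewrite Rminus_0_r, Rabs_left by lra. unfold x. lra. }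
  assert (Hx2 : Rabs (x - 0) < e2).
  { rewrite Rminus_0_r, Rabs_left by lra. unfold x. lra. }
  specialize (H1 x Hx1). specialize (H2 x Hx2). apply ball_R in H1. apply ball_R in H2.
  rewrite (E x Hx) in H1. simpl in H1, H2.
  assert (Rabs (A 0 - B 0) <= Rabs (B x - A 0) + Rabs (B x - B 0)).
  { replace (A 0 - B 0) with (-(B x - A 0) + (B x - B 0)) by ring.
    eapply Rle_trans. apply Rabs_triang. rewrite Rabs_Ropp. lra. }
  assert (H1' : Rabs (B x - A 0) < d/2) by (apply ball_R in H1; exact H1).
  assert (H2' : Rabs (B x - B 0) < d/2) by (apply ball_R in H2; exact H2).
  fold d in H3. lra.
Qed.

Lemma cont_opp (x : R) : continuous (fun y : R => - y) x.
Proof. apply continuity_pt_filterlim. apply continuity_pt_opp, continuity_pt_id. Qed.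

Lemma cont_scal (c x : R) : continuous (fun y : R => c * y) x.
Proof. apply continuity_pt_filterlim. apply continuity_pt_scal, continuity_pt_id. Qed.

Lemma one_side_right (A B : R -> R) :
  continuous A 0 -> continuous B 0 -> (forall x, 0 < x -> A x = B x) -> A 0 = B 0.
Proof.
  intros CA CB E.
  assert (H := one_side_left (fun x => A (- x)) (fun x => B (- x))).
  cbv beta in H. rewrite Ropp_0 in H. apply H.
  - apply continuous_comp. apply cont_opp. rewrite Ropp_0; auto.
  - apply continuous_comp. apply cont_opp. rewrite Ropp_0; auto.
  - intros x Hx. apply E. lra.
Qed.

Lemma cont_glue0 (phi p1 p2 : R -> R) :
  continuous p1 0 -> continuous p2 0 ->
  (forall x, x <= 0 -> phi x = p1 x) -> (forall x, 0 <= x -> phi x = p2 x) ->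
  continuous phi 0.
Proof.
  intros C1 C2 E1 E2. apply (proj2 (filterlim_locally (F:=locally 0) phi (phi 0))). intros eps.
  assert (C1' := proj1 (filterlim_locally (F:=locally 0) p1 (p1 0)) C1 eps).
  assert (C2' := proj1 (filterlim_locally (F:=locally 0) p2 (p2 0)) C2 eps).
  clear C1 C2. rename C1' into C1. rename C2' into C2.
  generalize (filter_and _ _ C1 C2). apply filter_imp. intros x [B1 B2].
  destruct (Rle_dec x 0).
  - rewrite (E1 x r), (E1 0) by lra. auto.
  - rewrite (E2 x), (E2 0) by lra. auto.
Qed.

Lemma deriv_glue0 (phi p1 p2 : R -> R) l :
  is_derive p1 0 l -> is_derive p2 0 l ->
  (forall x, x <= 0 -> phi x = p1 x) -> (forall x, 0 <= x -> phi x = p2 x) ->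
  is_derive phi 0 l.
Proof.
  intros D1 D2 E1 E2. apply is_derive_Reals in D1. apply is_derive_Reals in D2.
  apply is_derive_Reals. intros eps Heps.
  destruct (D1 eps Heps) as [d1 H1]. destruct (D2 eps Heps) as [d2 H2].
  assert (Hd : 0 < Rmin d1 d2) by (apply Rmin_pos; apply cond_pos).
  exists (mkposreal _ Hd). intros h Hh0 Hh. simpl in Hh.
  assert (Rmin d1 d2 <= d1) by apply Rmin_l. assert (Rmin d1 d2 <= d2) by apply Rmin_r.
  destruct (Rle_dec h 0).
  - rewrite (E1 (0 + h)), (E1 0) by lra. apply H1; auto. lra.
  - rewrite (E2 (0 + h)), (E2 0) by lra. apply H2; auto. lra.
Qed.

Definition full : R -> Prop := fun _ => True.

Lemma glue n : forall phi p1 p2,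
  CnOn n p1 full -> CnOn n p2 full ->
  (forall i, (i <= n)%nat -> Derive_n p1 i 0 = Derive_n p2 i 0) ->
  (forall x, x <= 0 -> phi x = p1 x) -> (forall x, 0 <= x -> phi x = p2 x) ->
  CnOn n phi full.
Proof.
  induction n; intros phi p1 p2 C1 C2 Hd E1 E2.
  - apply CnOn_0. intros x _.
    destruct (Rtotal_order x 0) as [Hx|[Hx|Hx]].
    + apply continuous_ext_loc with p1. 
      generalize (locally_lt0 x Hx). apply filter_imp. intros; symmetry; apply E1; lra.
      eapply CnOn_cont; eauto. exact I.
    + subst. apply cont_glue0 with p1 p2; auto.
      eapply CnOn_cont; eauto. exact I. eapply CnOn_cont; eauto. exact I.
    + apply continuous_ext_loc with p2.
      generalize (locally_gt0 x Hx). apply filter_imp. intros; symmetry; apply E2; lra.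
      eapply CnOn_cont; eauto. exact I.
  - assert (Dp : forall x, is_derive phi x (if Rle_dec x 0 then Derive p1 x else Derive p2 x)).
    { intros x. destruct (Rtotal_order x 0) as [Hx|[Hx|Hx]].
      + destruct (Rle_dec x 0); [|lra].
        apply is_derive_ext_loc with p1.
        generalize (locally_lt0 x Hx). apply filter_imp. intros; symmetry; apply E1; lra.
        apply Derive_correct. eapply CnOn_ex_derive; eauto. exact I.
      + subst. destruct (Rle_dec 0 0); [|lra].
        apply deriv_glue0 with p1 p2; auto.
        apply Derive_correct. eapply CnOn_ex_derive; eauto. exact I.
        replace (Derive p1 0) with (Derive p2 0) by (symmetry; exact (Hd 1%nat ltac:(lia))).
        apply Derive_correct. eapply CnOn_ex_derive; eauto. exact I.
      + destruct (Rle_dec x 0); [lra|].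
        apply is_derive_ext_loc with p2.
        generalize (locally_gt0 x Hx). apply filter_imp. intros; symmetry; apply E2; lra.
        apply Derive_correct. eapply CnOn_ex_derive; eauto. exact I. }
    apply CnOn_S_elim in C1 as [X1 C1]. apply CnOn_S_elim in C2 as [X2 C2].
    apply CnOn_S_intro. apply open_full.
    + intros x _. eexists. apply Dp.
    + apply (IHn _ (Derive p1) (Derive p2)); auto.
      * intros i Hi. rewrite !Derive_n_D. apply Hd. lia.
      * intros x Hx. rewrite (is_derive_unique _ _ _ (Dp x)). destruct (Rle_dec x 0); auto; lra.
      * intros x Hx. rewrite (is_derive_unique _ _ _ (Dp x)). destruct (Rle_dec x 0); auto.
        assert (x = 0) by lra. subst. exact (Hd 1%nat ltac:(lia)).
Qed.

Lemma side_left i W g c r :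
  CnOn i W full -> CnOn i g full -> (forall x, x < 0 -> W x = c * g (r * x)) ->
  Derive_n W i 0 = c * (r ^ i * Derive_n g i 0).
Proof.
  intros CW Cg E.
  assert (H := one_side_left (Derive_n W i) (fun x => c * (r ^ i * Derive_n g i (r * x)))).
  cbv beta in H. rewrite Rmult_0_r in H. apply H.
  - apply (CW 0 I).
  - apply (continuous_comp (fun x => Derive_n g i (r * x)) (fun y => c * (r ^ i * y))).
    apply (continuous_comp (fun x => r * x) (Derive_n g i)). apply cont_scal.
    apply (Cg _ I).
    apply (continuous_comp (fun y => r ^ i * y) (fun y => c * y)); apply cont_scal.
  - intros x Hx. rewrite (Derive_n_ext_loc W (fun t => c * g (r * t))).
    + rewrite Derive_n_scal_l. f_equal. apply Derive_n_comp_scal.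
      apply filter_forall. intros y k Hk. apply (Cg y I). auto.
    + generalize (locally_lt0 x Hx). apply filter_imp. intros; apply E; auto.
Qed.

Lemma side_right i W g c r :
  CnOn i W full -> CnOn i g full -> (forall x, 0 < x -> W x = c * g (r * x)) ->
  Derive_n W i 0 = c * (r ^ i * Derive_n g i 0).
Proof.
  intros CW Cg E.
  assert (H := one_side_right (Derive_n W i) (fun x => c * (r ^ i * Derive_n g i (r * x)))).
  cbv beta in H. rewrite Rmult_0_r in H. apply H.
  - apply (CW 0 I).
  - apply (continuous_comp (fun x => Derive_n g i (r * x)) (fun y => c * (r ^ i * y))).
    apply (continuous_comp (fun x => r * x) (Derive_n g i)). apply cont_scal.
    apply (Cg _ I).
    apply (continuous_comp (fun y => r ^ i * y) (fun y => c * y)); apply cont_scal.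
  - intros x Hx. rewrite (Derive_n_ext_loc W (fun t => c * g (r * t))).
    + rewrite Derive_n_scal_l. f_equal. apply Derive_n_comp_scal.
      apply filter_forall. intros y k Hk. apply (Cg y I). auto.
    + generalize (locally_gt0 x Hx). apply filter_imp. intros; apply E; auto.
Qed.

Lemma is_derive_inverse (W V : R -> R) (y l : R) :
  (forall x, W (V x) = x) -> (forall x, V (W x) = x) -> continuous V y ->
  is_derive W (V y) l -> l <> 0 -> is_derive V y (/ l).
Proof.
  intros WV VW CV D Hl. apply is_derive_Reals in D. apply is_derive_Reals.
  intros eps Heps.
  assert (HA : 0 < Rabs l) by (apply Rabs_pos_lt; auto).
  set (e1 := Rmin (Rabs l / 2) (eps * (Rabs l * Rabs l) / 2)).
  assert (He1 : 0 < e1).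
  { apply Rmin_pos. lra. assert (0 < Rabs l * Rabs l) by (apply Rmult_lt_0_compat; auto). nra. }
  destruct (D e1 He1) as [d1 H1].
  assert (CV' := proj1 (filterlim_locally (F:=locally y) V (V y)) CV d1).
  apply locally_R in CV' as [d [Hd Hc]].
  exists (mkposreal d Hd). intros t Ht0 Ht. simpl in Ht.
  set (hh := V (y + t) - V y).
  assert (Hh0 : hh <> 0).
  { unfold hh. intro E. assert (V (y + t) = V y) by lra.
    assert (W (V (y + t)) = W (V y)) by (rewrite H; auto). rewrite !WV in H0. lra. }
  assert (Hh : Rabs hh < d1).
  { assert (B := Hc (y + t) ltac:(replace (y + t - y) with t by ring; auto)).
    apply ball_R in B. exact B. }
  specialize (H1 hh Hh0 Hh).
  replace (V y + hh) with (V (y + t)) in H1 by (unfold hh; ring).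
  rewrite !WV in H1. replace (y + t - y) with t in H1 by ring.
  set (q := t / hh) in *.
  replace (hh / t) with (/ q) by (unfold q; field; auto).
  assert (Hq0 : q <> 0) by (unfold q; apply Rmult_integral_contrapositive_currified; auto; apply Rinv_neq_0_compat; auto).
  assert (e1a : e1 <= Rabs l / 2) by apply Rmin_l.
  assert (e1b : e1 <= eps * (Rabs l * Rabs l) / 2) by apply Rmin_r.
  assert (Hq : Rabs l / 2 < Rabs q).
  { assert (Rabs l <= Rabs q + Rabs (q - l)).
    { replace l with (q - (q - l)) at 1 by ring. eapply Rle_trans. apply Rabs_triang.
      rewrite Rabs_Ropp. lra. }
    lra. }
  replace (/ q - / l) with ((l - q) / (q * l)) by (field; auto).
  unfold Rdiv. rewrite Rabs_mult, Rabs_inv, Rabs_mult.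
  replace (Rabs (l - q)) with (Rabs (q - l)) by (rewrite <- Rabs_Ropp; f_equal; ring).
  assert (0 < Rabs q * Rabs l) by (apply Rmult_lt_0_compat; lra).
  apply Rmult_lt_reg_r with (Rabs q * Rabs l); auto.
  rewrite Rmult_assoc, Rinv_l by lra. rewrite Rmult_1_r.
  assert (Rabs l / 2 * Rabs l < Rabs q * Rabs l) by (apply Rmult_lt_compat_r; lra).
  nra.
Qed.

Lemma CnOn_inverse n : forall W V, CnOn n W full ->
  (forall x, W (V x) = x) -> (forall x, V (W x) = x) -> (forall x, continuous V x) ->
  (forall x, ex_derive W x) -> (forall x, Derive W x <> 0) -> CnOn n V full.
Proof.
  induction n; intros W V CW WV VW CV EW NW.
  - apply CnOn_0. auto.
  - assert (CW' := CnOn_le n (S n) W full ltac:(lia) CW).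
    apply CnOn_S_elim in CW as [_ CD].
    assert (DV : forall y, is_derive V y (/ Derive W (V y))).
    { intros y. apply is_derive_inverse with W; auto. apply Derive_correct; auto. }
    apply CnOn_S_intro' with (fun y => / Derive W (V y)). apply open_full.
    + intros y _. eexists; apply DV.
    + apply (CnOn_comp n (fun x => / Derive W x) V full full); try apply open_full.
      * apply CnOn_inv; auto. apply open_full.
      * apply (IHn W V); auto.
      * intros; exact I.
    + intros y _. apply is_derive_unique. apply DV.
Qed.

Lemma CkOn_intro k f O : (forall n, le_reg n k -> CnOn n f O) -> CkOn k f O.
Proof. destruct k; simpl; intros H. apply H. simpl; lia. intros n; apply H; exact I. Qed.

Lemma CkOn_elim k f O n : CkOn k f O -> le_reg n k -> CnOn n f O.
Proof. destruct k; simpl; intros H Hn. apply CnOn_le with n0; auto. apply H. Qed.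

Lemma CkOn_sub k f (O O' : R -> Prop) : (forall x, O' x -> O x) -> CkOn k f O -> CkOn k f O'.
Proof. intros S C. apply CkOn_intro. intros n Hn. apply CnOn_sub with O; auto. apply CkOn_elim with k; auto. Qed.

Lemma CkOn_ext k f g (O : R -> Prop) : open O -> CkOn k g O -> (forall x, O x -> f x = g x) -> CkOn k f O.
Proof. intros oO C E. apply CkOn_intro. intros n Hn. apply CnOn_ext with g; auto. apply CkOn_elim with k; auto. Qed.

Lemma CkOn_comp k g f (O O' : R -> Prop) : open O -> open O' ->
  CkOn k g O' -> CkOn k f O -> (forall x, O x -> O' (f x)) -> CkOn k (fun x => g (f x)) O.
Proof.
  intros oO oO' Cg Cf M. apply CkOn_intro. intros n Hn. apply CnOn_comp with O'; auto;
  apply CkOn_elim with k; auto.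
Qed.

Lemma CkOn_cont k f (O : R -> Prop) x : CkOn k f O -> O x -> continuous f x.
Proof. intros C Ox. apply (CnOn_cont 0 f O); auto. apply CkOn_elim with k; auto. destruct k; simpl; auto; lia. Qed.

Lemma CkOn_C1 k f O : valid_reg k -> CkOn k f O -> CnOn 1 f O.
Proof. intros V C. apply CkOn_elim with k; auto. Qed.

Lemma CkOn_linear k c (O : R -> Prop) : open O -> CkOn k (fun x => c * x) O.
Proof. intros oO. apply CkOn_intro. intros n _. apply CnOn_scal; auto. apply CnOn_id; auto. Qed.

Lemma CkOn_id k (O : R -> Prop) : open O -> CkOn k (fun x => x) O.
Proof. intros oO. apply CkOn_intro. intros n _. apply CnOn_id; auto. Qed.

Lemma w_le a x : x <= 0 -> w a x = x.
Proof. intros H. unfold w. destruct (Rle_dec x 0); auto; lra. Qed.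
Lemma w_gt a x : 0 < x -> w a x = a * x.
Proof. intros H. unfold w. destruct (Rle_dec x 0); auto; lra. Qed.
Lemma w_0 a : w a 0 = 0.
Proof. apply w_le; lra. Qed.
Lemma w_1 x : w 1 x = x.
Proof. unfold w. destruct (Rle_dec x 0); lra. Qed.
Lemma w_sign a x : 0 < a -> (w a x < 0 <-> x < 0) /\ (0 < w a x <-> 0 < x).
Proof.
  intros Ha. destruct (Rle_dec x 0).
  - rewrite w_le by auto. tauto.
  - rewrite w_gt by lra. split; split; intros; try nra; try lra.
Qed.
Lemma w_neq0 a x : 0 < a -> x <> 0 -> w a x <> 0.
Proof.
  intros Ha Hx. destruct (Rle_dec x 0).
  - rewrite w_le; auto.
  - rewrite w_gt by lra. apply Rmult_integral_contrapositive_currified; lra.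
Qed.
Lemma w_inv a x : 0 < a -> w (/ a) (w a x) = x.
Proof.
  intros Ha. destruct (Rle_dec x 0).
  - rewrite (w_le a x r), (w_le (/a) x r). auto.
  - rewrite (w_gt a x) by lra. rewrite w_gt by nra. field. lra.
Qed.
Lemma w_inv' a x : 0 < a -> w a (w (/ a) x) = x.
Proof.
  intros Ha. rewrite <- (Rinv_inv a) at 1. apply w_inv. apply Rinv_0_lt_compat; auto.
Qed.

Lemma w_Cn a n : 0 < a -> CnOn n (w a) (fun x => x <> 0).
Proof.
  intros Ha. apply CnOn_loc. intros x Hx. destruct (Rtotal_order x 0) as [H|[H|H]]; [|lra|].
  - exists (fun x => x < 0), (fun x => x). split; [apply open_lt0|split; [auto|split]].
    apply CnOn_id, open_lt0. intros; apply w_le; lra.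
  - exists (fun x => 0 < x), (fun x => a * x). split; [apply open_gt0|split; [auto|split]].
    apply CnOn_scal, CnOn_id; apply open_gt0. intros; apply w_gt; lra.
Qed.

Lemma w_Ck k a : 0 < a -> CkOn k (w a) (fun x => x <> 0).
Proof. intros Ha. apply CkOn_intro. intros; apply w_Cn; auto. Qed.

Lemma w_cont a x : continuous (w a) x.
Proof.
  assert (C : CnOn 0 (w a) full).
  { apply (glue 0 (w a) (fun x => x) (fun x => a * x)).
    apply CnOn_id, open_full. apply CnOn_scal, CnOn_id; apply open_full.
    intros i Hi. assert (i = 0%nat) by lia. subst. simpl. ring.
    intros; apply w_le; auto. intros y Hy. destruct (Req_dec y 0). subst. rewrite w_0. ring. apply w_gt; lra. }
  apply (CnOn_cont 0 _ full); auto. exact I.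
Qed.

Definition vinv (x : R) : L := if Req_EM_T x 0 then Orig2 else Pt x.

Lemma val_vinv x : val (vinv x) = x.
Proof. unfold vinv. destruct (Req_EM_T x 0); simpl; auto. Qed.
Lemma vinv_0 : vinv 0 = Orig2.
Proof. unfold vinv. destruct (Req_EM_T 0 0); auto; lra. Qed.
Lemma vinv_neq x : x <> 0 -> vinv x = Pt x.
Proof. unfold vinv. destruct (Req_EM_T x 0); auto; lra. Qed.
Lemma vinv_val p : p <> Pt 0 -> vinv (val p) = p.
Proof.
  destruct p as [x|]; simpl; intros H. apply vinv_neq. intro; subst; auto. apply vinv_0.
Qed.
Lemma vinv_not_Pt0 x : vinv x <> Pt 0.
Proof. unfold vinv. destruct (Req_EM_T x 0). discriminate. intro E; inversion E; auto. Qed.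

Lemma open_L_iff U : open_L U <-> open (fun x => U (Pt x)) /\ open (fun x => U (vinv x)).
Proof. reflexivity. Qed.

Lemma open_L_and U V : open_L U -> open_L V -> open_L (fun p => U p /\ V p).
Proof.
  intros [U1 U2] [V1 V2]. split; apply (open_and (T:=R_UniformSpace)); auto.
Qed.

Lemma open_L_ext U V : (forall p, U p <-> V p) -> open_L U -> open_L V.
Proof.
  intros E [U1 U2]. split.
  eapply open_ext; [|exact U1]; intros; apply E.
  eapply open_ext; [|exact U2]; intros; apply E.
Qed.

Lemma open_ball_cond c r (P : R -> Prop) : open (fun x => Rabs (x - c) < r /\ (x = c -> P x)).
Proof.
  apply open_R. intros x [Hx Px].
  destruct (Req_dec x c) as [->|ne].
  - exists (r - Rabs (c - c)). split; [lra|]. intros y Hy. split.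
    + rewrite Rminus_diag, Rabs_R0 in *. lra.
    + intros ->. auto.
  - exists (Rmin (r - Rabs (x - c)) (Rabs (x - c))). split.
    + apply Rmin_pos. lra. apply Rabs_pos_lt. lra.
    + intros y Hy. assert (H1 := Rmin_l (r - Rabs (x - c)) (Rabs (x - c))).
      assert (H2 := Rmin_r (r - Rabs (x - c)) (Rabs (x - c))).
      assert (T : Rabs (y - c) <= Rabs (y - x) + Rabs (x - c)).
      { replace (y - c) with ((y - x) + (x - c)) by ring. apply Rabs_triang. }
      split. lra. intros ->. exfalso. rewrite <- Rabs_Ropp in Hy.
      replace (- (c - x)) with (x - c) in Hy by ring. lra.
Qed.

Definition nb (p : L) (r : R) : L -> Prop :=
  fun q => Rabs (val q - val p) < r /\ (val q = val p -> q = p).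

Lemma open_nb p r : open_L (nb p r).
Proof.
  split.
  - apply (open_ball_cond (val p) r (fun x => Pt x = p)).
  - change (open (fun x => nb p r (vinv x))).
    eapply open_ext; [|apply (open_ball_cond (val p) r (fun x => vinv x = p))].
    intros x. unfold nb. rewrite val_vinv. tauto.
Qed.

Lemma nb_center p r : 0 < r -> nb p r p.
Proof. intros. unfold nb. rewrite Rminus_diag, Rabs_R0. auto. Qed.

Definition badpair (p q : L) : Prop := (p = Pt 0 /\ q = Orig2) \/ (p = Orig2 /\ q = Pt 0).

Lemma nonsep A B : open_L A -> open_L B -> A (Pt 0) -> B Orig2 -> exists p, A p /\ B p.
Proof.
  intros [A1 _] [_ B2] HA HB.
  assert (LA := A1 0 HA). assert (LB : locally 0 (fun x => B (vinv x))).
  { apply B2. change (B (vinv 0)). rewrite vinv_0. auto. }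
  apply locally_R in LA as [e1 [He1 H1]]. apply locally_R in LB as [e2 [He2 H2]].
  assert (Hm : 0 < Rmin e1 e2) by (apply Rmin_pos; auto).
  assert (Rmin e1 e2 <= e1) by apply Rmin_l. assert (Rmin e1 e2 <= e2) by apply Rmin_r.
  set (x := Rmin e1 e2 / 2).
  assert (Hx : Rabs (x - 0) = x) by (rewrite Rminus_0_r; apply Rabs_right; unfold x; lra).
  exists (Pt x). split. apply H1. rewrite Hx; unfold x; lra.
  rewrite <- (vinv_neq x) by (unfold x; lra). apply H2. rewrite Hx; unfold x; lra.
Qed.

Lemma sep p q : p <> q -> ~ badpair p q ->
  exists A B, open_L A /\ open_L B /\ A p /\ B q /\ forall z, A z -> B z -> False.
Proof.
  intros ne nbad. destruct (Req_dec (val p) (val q)) as [E|NE].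
  - exfalso. destruct p as [x|], q as [y|]; simpl in E; subst.
    + auto. + apply nbad; left; auto. + apply nbad; right; auto. + auto.
  - set (r := Rabs (val p - val q) / 2).
    assert (Hr : 0 < r) by (unfold r; assert (0 < Rabs (val p - val q)) by (apply Rabs_pos_lt; lra); lra).
    exists (nb p r), (nb q r). split; [apply open_nb|]. split; [apply open_nb|].
    split; [apply nb_center; auto|]. split; [apply nb_center; auto|].
    intros z [Hz1 _] [Hz2 _].
    assert (Rabs (val p - val q) <= Rabs (val z - val p) + Rabs (val z - val q)).
    { replace (val p - val q) with (- (val z - val p) + (val z - val q)) by ring.
      eapply Rle_trans. apply Rabs_triang. rewrite Rabs_Ropp. lra. }
    unfold r in *. lra.
Qed.

Lemma origins_preserved f : continuous_L f -> (forall p q, f p = f q -> p = q) ->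
  badpair (f (Pt 0)) (f Orig2).
Proof.
  intros Cf If. destruct (classic (badpair (f (Pt 0)) (f Orig2))) as [H|H]; auto.
  exfalso. assert (ne : f (Pt 0) <> f Orig2) by (intro E; apply If in E; discriminate).
  destruct (sep _ _ ne H) as [A [B [oA [oB [HA [HB D]]]]]].
  destruct (nonsep (fun p => A (f p)) (fun p => B (f p))) as [z [Az Bz]]; auto.
  apply (D (f z)); auto.
Qed.

Lemma image_U P y : image chartU P y <-> P (Pt y).
Proof.
  unfold image; simpl. split.
  - intros [p [Hp [Pp E]]]. destruct p as [x|]; simpl in *; [subst; auto|congruence].
  - intros H. exists (Pt y). split; [discriminate|auto].
Qed.

Lemma image_V h hinv P y : (forall x, hinv (h x) = x) -> (forall x, h (hinv x) = x) ->
  (image (chartV h) P y <-> P (vinv (hinv y))).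
Proof.
  intros HK KH. unfold image; simpl. split.
  - intros [p [Hp [Pp E]]]. rewrite <- E, HK, vinv_val; auto.
  - intros H. exists (vinv (hinv y)). split; [apply vinv_not_Pt0|]. split; auto.
    rewrite val_vinv; auto.
Qed.

Lemma vinv_Orig2_iff x : vinv x = Orig2 <-> x = 0.
Proof. split. intros E. rewrite <- (val_vinv x), E. auto. intros ->. apply vinv_0. Qed.

Lemma cont_open (h : R -> R) (O : R -> Prop) : (forall x, continuous h x) -> open O ->
  open (fun x => O (h x)).
Proof. intros C oO. apply open_comp; auto. intros x _. apply C. Qed.

Lemma is_chart_U : is_chart chartU.
Proof.
  split; [|split; [|split; [|split]]]; simpl.
  - split.
    + eapply open_ext; [|apply open_full]. intros x; split; [discriminate|intros; exact I].
    + change (open (fun x => vinv x <> Orig2)). eapply open_ext; [|apply open_neq0].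
      intros x. rewrite vinv_Orig2_iff. tauto.
  - intros [x|] [y|] Hp Hq E; simpl in *; try congruence.
  - eapply open_ext; [|apply open_full]. intros y. rewrite image_U. unfold full; split; auto; discriminate.
  - intros O oO. split.
    + eapply open_ext; [|apply oO]. intros x; simpl. split; [intros; split; [discriminate|auto]|tauto].
    + change (open (fun x => vinv x <> Orig2 /\ O (val (vinv x)))).
      eapply open_ext; [|apply (open_and _ _ open_neq0 oO)]. intros x. rewrite val_vinv.
      rewrite vinv_Orig2_iff. tauto.
  - intros V [V1 V2] HV. eapply open_ext; [|apply V1]. intros y. rewrite image_U. tauto.
Qed.

Lemma is_chart_V (h hinv : R -> R) : (forall x, continuous h x) -> (forall x, continuous hinv x) ->
  (forall x, hinv (h x) = x) -> (forall x, h (hinv x) = x) -> is_chart (chartV h).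
Proof.
  intros Ch Ci HK KH.
  split; [|split; [|split; [|split]]]; simpl.
  - split.
    + eapply open_ext; [|apply open_neq0]. intros x. split; intros H E; apply H; [inversion E|subst]; auto.
    + change (open (fun x => vinv x <> Pt 0)). eapply open_ext; [|apply open_full].
      intros x. split. intros _; apply vinv_not_Pt0. intros; exact I.
  - intros p q Hp Hq E. rewrite <- (vinv_val p), <- (vinv_val q) by auto.
    f_equal. rewrite <- (HK (val p)), <- (HK (val q)). congruence.
  - eapply open_ext; [|apply open_full]. intros y. rewrite (image_V h hinv); auto. unfold full; tauto.
  - intros O oO. split.
    + eapply open_ext; [|apply (open_and _ _ open_neq0 (cont_open h O Ch oO))].
      intros x; simpl. split; intros [H1 H2]; split; auto. intros E; inversion E; auto.
      intros ->; auto.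
    + change (open (fun x => vinv x <> Pt 0 /\ O (h (val (vinv x))))).
      eapply open_ext; [|apply (cont_open h O Ch oO)]. intros x. rewrite val_vinv.
      split; [intros H; split; auto; apply vinv_not_Pt0|tauto].
  - intros V [V1 V2] HV. eapply open_ext; [|apply (cont_open hinv _ Ci V2)].
    intros y. rewrite (image_V h hinv); auto. tauto.
Qed.

Lemma is_chart_Va a : 0 < a -> is_chart (chartV (w a)).
Proof.
  intros Ha. apply is_chart_V with (w (/ a)).
  apply w_cont. apply w_cont. intros; apply w_inv; auto. intros; apply w_inv'; auto.
Qed.

Lemma compat_UU k : compat k chartU chartU.
Proof.
  exists (fun x => x). split; auto. apply CkOn_sub with full. unfold full; auto.
  apply CkOn_id, open_full.
Qed.

Lemma compat_VV k a : 0 < a -> compat k (chartV (w a)) (chartV (w a)).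
Proof.
  exists (fun x => x). split; auto. apply CkOn_sub with full. unfold full; auto.
  apply CkOn_id, open_full.
Qed.

Lemma compat_UV k a : 0 < a -> compat k chartU (chartV (w a)).
Proof.
  intros Ha. exists (w a). split; auto. apply CkOn_sub with (fun x => x <> 0).
  intros y Hy. rewrite image_U in Hy. simpl in Hy. intros ->. auto.
  apply w_Ck; auto.
Qed.

Lemma compat_VU k a : 0 < a -> compat k (chartV (w a)) chartU.
Proof.
  intros Ha. exists (w (/ a)). split.
  - intros p _ _. simpl. rewrite w_inv; auto.
  - apply CkOn_sub with (fun x => x <> 0).
    + intros y Hy. rewrite (image_V (w a) (w (/ a))) in Hy; simpl in Hy.
      intros ->. apply Hy. rewrite w_0. apply vinv_0.
      intros; apply w_inv; auto. intros; apply w_inv'; auto.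
    + apply w_Ck. apply Rinv_0_lt_compat; auto.
Qed.

Lemma Sa_U k a : 0 < a -> Sa k a chartU.
Proof.
  intros Ha. split. apply is_chart_U. intros d [->| ->].
  split; apply compat_UU. split. apply compat_UV; auto. apply compat_VU; auto.
Qed.

Lemma Sa_V k a : 0 < a -> Sa k a (chartV (w a)).
Proof.
  intros Ha. split. apply is_chart_Va; auto. intros d [->| ->].
  split. apply compat_VU; auto. apply compat_UV; auto. split; apply compat_VV; auto.
Qed.

Lemma atlas_a k a : 0 < a -> is_atlas k (special_atlas (w a)).
Proof.
  intros Ha. split; [|split].
  - intros c [->| ->]. apply is_chart_U. apply is_chart_Va; auto.
  - intros [x|]. exists chartU. split. left; auto. simpl; discriminate.
    exists (chartV (w a)). split. right; auto. simpl; discriminate.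
  - intros c d [->| ->] [->| ->]. apply compat_UU. apply compat_UV; auto.
    apply compat_VU; auto. apply compat_VV; auto.
Qed.

Definition Ck_pair (k : reg) (c d : chart) (f : L -> L) : Prop :=
  exists F : R -> R,
    (forall p, dom c p -> dom d (f p) -> cmap d (f p) = F (cmap c p)) /\
    CkOn k F (image c (fun p => dom d (f p))).

Definition cinv (c : chart) (y : R) : L :=
  epsilon (inhabits (Pt 0)) (fun p => dom c p /\ cmap c p = y).

Lemma cinv_spec c p : is_chart c -> dom c p -> cinv c (cmap c p) = p.
Proof.
  intros [_ [Inj _]] Hp. unfold cinv.
  destruct (epsilon_spec (inhabits (Pt 0)) (fun q => dom c q /\ cmap c q = cmap c p)) as [H1 H2].
  exists p; auto. apply Inj; auto.
Qed.

Lemma chart_image_open c V : is_chart c -> open_L V -> (forall p, V p -> dom c p) -> open (image c V).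
Proof. intros [_ [_ [_ [_ H]]]]. apply H. Qed.

Lemma chart_dom_open c : is_chart c -> open_L (dom c).
Proof. intros [H _]; exact H. Qed.

Lemma patch k A B f :
  (forall c, A c -> is_chart c) -> (forall p, exists c, A c /\ dom c p) ->
  (forall c, B c -> is_chart c) -> (forall p, exists c, B c /\ dom c p) ->
  continuous_L f -> (forall e e', A e -> B e' -> Ck_pair k e e' f) ->
  forall c d, structure_of k A c -> structure_of k B d -> Ck_pair k c d f.
Proof.
  intros ChA CovA ChB CovB Cf H c d [cc Sc] [cd Sd].
  exists (fun y => cmap d (f (cinv c y))). split.
  - intros p Hp _. rewrite cinv_spec; auto.
  - apply CkOn_intro. intros n Hn. apply CnOn_loc. intros y0 [p0 [Hp0 [Hfp0 Ey0]]].
    destruct (CovA p0) as [e [Ae He]]. destruct (CovB (f p0)) as [e' [Be' He']].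
    destruct (Sc e Ae) as [[F1 [EF1 CF1]] _].
    destruct (Sd e' Be') as [_ [F3 [EF3 CF3]]].
    destruct (H e e' Ae Be') as [Phi [EPhi CPhi]].
    assert (ce := ChA e Ae). assert (ce' := ChB e' Be').
    set (N := image c (fun p => dom c p /\ dom e p /\ dom e' (f p) /\ dom d (f p))).
    set (O2 := image e (fun q => dom e q /\ dom e' (f q) /\ dom d (f q))).
    set (O3 := image e' (fun q => dom e' q /\ dom d q)).
    assert (oN : open N).
    { apply chart_image_open; auto. 2: intros p [? _]; auto.
      repeat apply open_L_and; auto; try apply chart_dom_open; auto.
      apply (Cf (dom e')). apply chart_dom_open; auto.
      apply (Cf (dom d)). apply chart_dom_open; auto. }
    assert (oO2 : open O2).
    { apply chart_image_open; auto. 2: intros p [? _]; auto.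
      repeat apply open_L_and; auto; try apply chart_dom_open; auto.
      apply (Cf (dom e')). apply chart_dom_open; auto.
      apply (Cf (dom d)). apply chart_dom_open; auto. }
    assert (oO3 : open O3).
    { apply chart_image_open; auto. 2: intros p [? _]; auto.
      repeat apply open_L_and; auto; try apply chart_dom_open; auto. }
    exists N, (fun y => F3 (Phi (F1 y))). split; [auto|split; [|split]].
    + exists p0. repeat split; auto.
    + apply (CnOn_comp n F3 (fun y => Phi (F1 y)) N O3); auto.
      * apply CnOn_sub with (image e' (dom d)). 
        intros z [q [Hq [[_ Hq2] Ez]]]. exists q; auto.
        apply CkOn_elim with k; auto.
      * apply (CnOn_comp n Phi F1 N O2); auto.
        -- apply CnOn_sub with (image e (fun p => dom e' (f p))).
           intros z [q [Hq [[_ [Hq2 _]] Ez]]]. exists q; auto.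
           apply CkOn_elim with k; auto.
        -- apply CnOn_sub with (image c (dom e)).
           intros z [q [Hq [[_ [Hq2 _]] Ez]]]. exists q; auto.
           apply CkOn_elim with k; auto.
        -- intros y [q [Hq [[_ [Hq1 [Hq2 Hq3]]] Ey]]]. subst y.
           rewrite <- EF1 by auto. exists q. repeat split; auto.
      * intros y [q [Hq [[_ [Hq1 [Hq2 Hq3]]] Ey]]]. subst y.
        rewrite <- EF1 by auto. rewrite <- EPhi by auto. exists (f q). repeat split; auto.
    + intros y [q [Hq [[_ [Hq1 [Hq2 Hq3]]] Ey]]]. subst y.
      rewrite cinv_spec by auto. rewrite EF3 by auto. rewrite EPhi by auto.
      rewrite EF1 by auto. auto.
Qed.

Definition lift (h : R -> R) (e : bool) : L -> L :=
  fun p => match p with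
           | Pt x => if e then vinv (h x) else Pt (h x)
           | Orig2 => if e then Pt (h 0) else vinv (h 0)
           end.

Lemma lift_Pt_eq h e x : lift h e (Pt x) = if e then vinv (h x) else Pt (h x).
Proof. reflexivity. Qed.
Lemma lift_O_eq h e : lift h e Orig2 = if e then Pt (h 0) else vinv (h 0).
Proof. reflexivity. Qed.

Lemma val_lift h e p : val (lift h e p) = h (val p).
Proof. destruct p, e; simpl; rewrite ?val_vinv; auto. Qed.

Definition nz (h : R -> R) : Prop := forall x, x <> 0 -> h x <> 0.

Lemma lift_vinv h e z : nz h -> lift h e (vinv z) = (if e then Pt (h z) else vinv (h z)).
Proof.
  intros N. destruct (Req_dec z 0) as [->|ne].
  - rewrite vinv_0. destruct e; reflexivity.
  - rewrite vinv_neq by auto. simpl.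
    destruct e; [apply vinv_neq, N; auto | symmetry; apply vinv_neq, N; auto].
Qed.

Lemma lift_Pt0 h e : h 0 = 0 -> lift h e (Pt 0) = if e then Orig2 else Pt 0.
Proof. intros H. simpl. rewrite H. destruct e; auto. apply vinv_0. Qed.
Lemma lift_Orig2 h e : h 0 = 0 -> lift h e Orig2 = if e then Pt 0 else Orig2.
Proof. intros H. simpl. rewrite H. destruct e; auto. apply vinv_0. Qed.

Lemma lift_cont (h : R -> R) e : (forall x, continuous h x) -> nz h -> continuous_L (lift h e).
Proof.
  intros C N U [U1 U2]. split.
  - destruct e; simpl.
    + exact (cont_open h _ C U2).
    + exact (cont_open h _ C U1).
  - change (open (fun x => U (lift h e (vinv x)))).
    destruct e.
    + apply (open_ext (fun x => U (Pt (h x)))). intros x. rewrite lift_vinv by auto. reflexivity.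
      exact (cont_open h _ C U1).
    + apply (open_ext (fun x => U (vinv (h x)))). intros x. rewrite lift_vinv by auto. reflexivity.
      exact (cont_open h _ C U2).
Qed.

Lemma lift_inv h hi e : (forall x, hi (h x) = x) -> h 0 = 0 -> nz hi ->
  forall p, lift hi e (lift h e p) = p.
Proof.
  intros HK H0 N [x|].
  - destruct e; simpl.
    + rewrite lift_vinv by auto. rewrite HK; auto.
    + rewrite HK; auto.
  - destruct e; simpl.
    + rewrite HK. apply vinv_0.
    + rewrite lift_vinv by auto. rewrite HK. apply vinv_0.
Qed.

Lemma nz_of_inv h hi : (forall x, hi (h x) = x) -> hi 0 = 0 -> nz h.
Proof. intros HK H0 x Hx E. apply Hx. rewrite <- (HK x), E. auto. Qed.

Definition Good (k : reg) (a b : R) (h : R -> R) (e : bool) : Prop :=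
  h 0 = 0 /\
  if e then CkOn k (fun x => w b (h x)) full /\ CkOn k (fun y => h (w (/ a) y)) full
  else CkOn k h full /\ CkOn k (fun y => w b (h (w (/ a) y))) full.

Lemma Good_cont k a b h e : 0 < b -> Good k a b h e -> forall x, continuous h x.
Proof.
  intros Hb [H0 G] x. destruct e; destruct G as [G1 G2].
  - apply continuous_ext with (fun x => w (/ b) (w b (h x))).
    intros; apply w_inv; auto.
    apply (continuous_comp (fun x => w b (h x)) (w (/ b))).
    apply (CkOn_cont k _ full); auto. exact I. apply w_cont.
  - apply (CkOn_cont k _ full); auto. exact I.
Qed.

Lemma CkOn_nz_sub k F (O : R -> Prop) : CkOn k F (fun x => x <> 0) -> (forall y, O y -> y <> 0) -> CkOn k F O.
Proof. intros C S. apply CkOn_sub with (fun x => x <> 0); auto. Qed.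

Lemma Ck_pairs_lift k a b h e : 0 < a -> 0 < b -> Good k a b h e -> nz h ->
  forall c d, special_atlas (w a) c -> special_atlas (w b) d -> Ck_pair k c d (lift h e).
Proof.
  intros Ha Hb [H0 G] N c d [->| ->] [->| ->].
  -
    exists h. split. intros p _ _. simpl. apply val_lift.
    destruct e; destruct G as [G1 G2].
    + apply CkOn_nz_sub.
      * apply CkOn_ext with (fun y => w (/ b) (w b (h y))). apply open_neq0.
        apply (CkOn_comp k (w (/ b)) (fun y => w b (h y)) _ (fun x => x <> 0)).
        apply open_neq0. apply open_neq0. apply w_Ck. apply Rinv_0_lt_compat; auto.
        apply CkOn_sub with full; auto. intros; exact I.
        intros x Hx. apply w_neq0; auto.
        intros x _. rewrite w_inv; auto.
      * intros y Hy. rewrite image_U in Hy. simpl in Hy. intros ->. apply Hy.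
        rewrite H0. apply vinv_0.
    + apply CkOn_sub with full; auto. intros; exact I.
  -
    exists (fun y => w b (h y)). split. intros p _ _. simpl. rewrite val_lift; auto.
    destruct e; destruct G as [G1 G2].
    + apply CkOn_sub with full; auto. intros; exact I.
    + apply CkOn_nz_sub.
      * apply (CkOn_comp k (w b) h _ (fun x => x <> 0)).
        apply open_neq0. apply open_neq0. apply w_Ck; auto.
        apply CkOn_sub with full; auto. intros; exact I.
        auto.
      * intros y Hy. rewrite image_U in Hy. simpl in Hy. intros ->. apply Hy.
        rewrite H0. auto.
  -
    exists (fun y => h (w (/ a) y)). split. intros p _ _. simpl. rewrite val_lift, w_inv; auto.
    destruct e; destruct G as [G1 G2].
    + apply CkOn_sub with full; auto. intros; exact I.
    + apply CkOn_nz_sub.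
      * apply (CkOn_comp k h (w (/ a)) _ full).
        apply open_neq0. apply open_full. apply CkOn_sub with full; auto.
        apply w_Ck. apply Rinv_0_lt_compat; auto. intros; exact I.
      * intros y Hy. rewrite (image_V (w a) (w (/ a))) in Hy; simpl in Hy.
        intros ->. apply Hy. rewrite w_0, vinv_0. simpl. rewrite H0. apply vinv_0.
        intros; apply w_inv; auto. intros; apply w_inv'; auto.
  -
    exists (fun y => w b (h (w (/ a) y))). split. intros p _ _. simpl. rewrite val_lift, w_inv; auto.
    destruct e; destruct G as [G1 G2].
    + apply CkOn_nz_sub.
      * apply (CkOn_comp k (fun x => w b (h x)) (w (/ a)) _ full).
        apply open_neq0. apply open_full. apply CkOn_sub with full; auto.
        apply w_Ck. apply Rinv_0_lt_compat; auto. intros; exact I.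
      * intros y Hy. rewrite (image_V (w a) (w (/ a))) in Hy; simpl in Hy.
        intros ->. apply Hy. rewrite w_0, vinv_0. simpl. rewrite H0. auto.
        intros; apply w_inv; auto. intros; apply w_inv'; auto.
    + apply CkOn_sub with full; auto. intros; exact I.
Qed.

Lemma Ck_map_lift k a b h e : 0 < a -> 0 < b -> Good k a b h e -> nz h ->
  Ck_map k (Sa k a) (Sa k b) (lift h e).
Proof.
  intros Ha Hb G N. assert (AA := atlas_a k a Ha). assert (AB := atlas_a k b Hb).
  destruct AA as [A1 [A2 _]]. destruct AB as [B1 [B2 _]].
  assert (Cf : continuous_L (lift h e)).
  { apply lift_cont; auto. apply Good_cont with k a b e; auto. }
  split; auto. intros c d Sc Sd.
  apply (patch k (special_atlas (w a)) (special_atlas (w b))); auto.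
  apply Ck_pairs_lift; auto.
Qed.

Definition is_ex (f : L -> L) : bool := match f (Pt 0) with Orig2 => true | Pt _ => false end.

Lemma diff_lift f g : continuous_L f -> (forall p, g (f p) = p) ->
  f = lift (fun x => val (f (Pt x))) (is_ex f).
Proof.
  intros Cf GF. assert (If : forall p q, f p = f q -> p = q).
  { intros p q E. rewrite <- (GF p), <- (GF q), E. auto. }
  assert (B := origins_preserved f Cf If).
  assert (Hx : forall x, x <> 0 -> f (Pt x) = Pt (val (f (Pt x))) /\ val (f (Pt x)) <> 0).
  { intros x Hx. destruct (f (Pt x)) as [y|] eqn:E.
    - simpl. split; auto. intros ->. destruct B as [[B1 B2]|[B1 B2]].
      + rewrite <- B1 in E. apply If in E. inversion E; auto.
      + rewrite <- B2 in E. apply If in E. discriminate.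
    - exfalso. destruct B as [[B1 B2]|[B1 B2]].
      + rewrite <- B2 in E. apply If in E. discriminate.
      + rewrite <- B1 in E. apply If in E. inversion E; auto. }
  apply functional_extensionality. intros [x|].
  - rewrite lift_Pt_eq. unfold is_ex. destruct (Req_dec x 0) as [->|ne].
    + destruct B as [[B1 B2]|[B1 B2]]; rewrite B1; cbn [val]; auto. rewrite vinv_0; auto.
    + destruct (Hx x ne) as [E1 E2].
      destruct (f (Pt 0)); rewrite E1; cbn [val]; auto. rewrite vinv_neq; auto.
  - rewrite lift_O_eq. unfold is_ex. destruct B as [[B1 B2]|[B1 B2]]; rewrite B1, B2; cbn [val]; auto.
    rewrite vinv_0; auto.
Qed.

Lemma Good_of_Ck_map k a b h e : 0 < a -> 0 < b -> h 0 = 0 -> nz h ->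
  Ck_map k (Sa k a) (Sa k b) (lift h e) -> Good k a b h e.
Proof.
  intros Ha Hb H0 N [_ C]. split; auto. destruct e.
  - split.
    + destruct (C chartU (chartV (w b)) (Sa_U k a Ha) (Sa_V k b Hb)) as [F [EF CF]].
      apply CkOn_ext with F. apply open_full.
      apply CkOn_sub with (image chartU (fun p => dom (chartV (w b)) (lift h true p))); auto.
      intros y _. rewrite image_U. cbn [dom cmap chartU chartV val]. apply vinv_not_Pt0.
      intros x _. assert (E := EF (Pt x)). cbn [dom cmap chartU chartV val] in E. rewrite val_lift in E. apply E.
      discriminate. apply vinv_not_Pt0.
    + destruct (C (chartV (w a)) chartU (Sa_V k a Ha) (Sa_U k b Hb)) as [F [EF CF]].
      apply CkOn_ext with F. apply open_full.
      apply CkOn_sub with (image (chartV (w a)) (fun p => dom chartU (lift h true p))); auto.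
      intros y _. rewrite (image_V (w a) (w (/ a))). cbn [dom cmap chartU chartV val]. rewrite lift_vinv by auto. discriminate.
      intros; apply w_inv; auto. intros; apply w_inv'; auto.
      intros y _. assert (E := EF (vinv (w (/ a) y))). cbn [dom cmap chartU chartV val] in E.
      rewrite val_lift, val_vinv, w_inv' in E by auto. apply E.
      apply vinv_not_Pt0. rewrite lift_vinv by auto. discriminate.
  - split.
    + destruct (C chartU chartU (Sa_U k a Ha) (Sa_U k b Hb)) as [F [EF CF]].
      apply CkOn_ext with F. apply open_full.
      apply CkOn_sub with (image chartU (fun p => dom chartU (lift h false p))); auto.
      intros y _. rewrite image_U. cbn [dom cmap chartU chartV val]. discriminate.
      intros x _. assert (E := EF (Pt x)). cbn [dom cmap chartU chartV val] in E. apply E; discriminate.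
    + destruct (C (chartV (w a)) (chartV (w b)) (Sa_V k a Ha) (Sa_V k b Hb)) as [F [EF CF]].
      apply CkOn_ext with F. apply open_full.
      apply CkOn_sub with (image (chartV (w a)) (fun p => dom (chartV (w b)) (lift h false p))); auto.
      intros y _. rewrite (image_V (w a) (w (/ a))). cbn [dom cmap chartU chartV val]. rewrite lift_vinv by auto. apply vinv_not_Pt0.
      intros; apply w_inv; auto. intros; apply w_inv'; auto.
      intros y _. assert (E := EF (vinv (w (/ a) y))). cbn [dom cmap chartU chartV val] in E.
      rewrite val_lift, val_vinv, w_inv' in E by auto. apply E.
      apply vinv_not_Pt0. rewrite lift_vinv by auto. apply vinv_not_Pt0.
Qed.

Definition Char (k : reg) (a b : R) (f : L -> L) (h hi : R -> R) (e : bool) : Prop :=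
  f = lift h e /\ (forall x, hi (h x) = x) /\ (forall x, h (hi x) = x) /\
  Good k a b h e /\ Good k b a hi e.

Theorem Diff_char k a b f : 0 < a -> 0 < b ->
  (Diff k (Sa k a) (Sa k b) f <-> exists h hi e, Char k a b f h hi e).
Proof.
  intros Ha Hb. split.
  - intros [g [GF [FG [Cf Cg]]]].
    assert (Ef := diff_lift f g (proj1 Cf) GF).
    assert (Eg := diff_lift g f (proj1 Cg) FG).
    assert (If : forall p q, f p = f q -> p = q).
    { intros p q E. rewrite <- (GF p), <- (GF q), E. auto. }
    assert (Ig : forall p q, g p = g q -> p = q).
    { intros p q E. rewrite <- (FG p), <- (FG q), E. auto. }
    assert (Bf := origins_preserved f (proj1 Cf) If).
    assert (Bg := origins_preserved g (proj1 Cg) Ig).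
    set (h := fun x => val (f (Pt x))) in *. set (hi := fun x => val (g (Pt x))) in *.
    assert (Vf : forall p, val (f p) = h (val p)).
    { intros p. assert (E := f_equal (fun F => val (F p)) Ef). cbv beta in E. rewrite val_lift in E. exact E. }
    assert (Vg : forall p, val (g p) = hi (val p)).
    { intros p. assert (E := f_equal (fun F => val (F p)) Eg). cbv beta in E. rewrite val_lift in E. exact E. }
    assert (H0 : h 0 = 0).
    { unfold h. destruct Bf as [[B1 B2]|[B1 B2]]; rewrite B1; auto. }
    assert (Hi0 : hi 0 = 0).
    { unfold hi. destruct Bg as [[B1 B2]|[B1 B2]]; rewrite B1; auto. }
    assert (HK : forall x, hi (h x) = x).
    { intros x. change (hi (h (val (Pt x))) = val (Pt x)). rewrite <- Vf, <- Vg, GF. auto. }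
    assert (KH : forall x, h (hi x) = x).
    { intros x. change (h (hi (val (Pt x))) = val (Pt x)). rewrite <- Vg, <- Vf, FG. auto. }
    assert (Ee : is_ex g = is_ex f).
    { unfold is_ex. destruct Bf as [[B1 B2]|[B1 B2]].
      - rewrite <- B1 at 1. rewrite GF, B1. auto.
      - rewrite <- B2 at 1. rewrite GF, B1. auto. }
    exists h, hi, (is_ex f). split; auto. split; auto. split; auto. split.
    + apply Good_of_Ck_map; auto. apply nz_of_inv with hi; auto. rewrite <- Ef. exact Cf.
    + rewrite <- Ee. apply Good_of_Ck_map; auto. apply nz_of_inv with h; auto. rewrite <- Eg. exact Cg.
  - intros [h [hi [e [-> [HK [KH [G1 G2]]]]]]].
    assert (N1 : nz h) by (apply nz_of_inv with hi; auto; apply G2).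
    assert (N2 : nz hi) by (apply nz_of_inv with h; auto; apply G1).
    exists (lift hi e). split; [|split; [|split]].
    + apply lift_inv; auto. apply G1.
    + apply lift_inv; auto. apply G2.
    + apply Ck_map_lift; auto.
    + apply Ck_map_lift; auto.
Qed.

Definition incr (h : R -> R) : Prop := forall x y, x < y -> h x < h y.
Definition decr (h : R -> R) : Prop := forall x y, x < y -> h y < h x.

Lemma cont_affine (x0 x1 t : R) : continuous (fun t => (1 - t) * x0 + t * x1) t.
Proof. apply (ex_derive_continuous (fun t => (1 - t) * x0 + t * x1)). auto_derive. auto. Qed.

Lemma ivt_path (h : R -> R) x0 x1 y0 y1 : (forall x, continuous h x) ->
  (forall x y, h x = h y -> x = y) -> x0 < y0 -> x1 < y1 ->
  h x0 - h y0 < 0 -> 0 < h x1 - h y1 -> False.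
Proof.
  intros C I H0 H1 N P.
  set (g := fun t => h ((1 - t) * x0 + t * x1) - h ((1 - t) * y0 + t * y1)).
  assert (Cg : continuity g).
  { intros t. apply continuity_pt_filterlim. unfold g.
    apply (continuous_plus (fun t => h ((1 - t) * x0 + t * x1)) (fun t => - h ((1 - t) * y0 + t * y1))).
    apply (continuous_comp (fun t => (1 - t) * x0 + t * x1) h). apply cont_affine. apply C.
    apply (continuous_comp (fun t => h ((1 - t) * y0 + t * y1)) (fun y => - y)).
    apply (continuous_comp (fun t => (1 - t) * y0 + t * y1) h). apply cont_affine. apply C.
    apply cont_opp. }
  assert (g0 : g 0 < 0).
  { unfold g. replace ((1 - 0) * x0 + 0 * x1) with x0 by ring.
    replace ((1 - 0) * y0 + 0 * y1) with y0 by ring. auto. }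
  assert (g1 : 0 < g 1).
  { unfold g. replace ((1 - 1) * x0 + 1 * x1) with x1 by ring.
    replace ((1 - 1) * y0 + 1 * y1) with y1 by ring. auto. }
  destruct (IVT g 0 1 Cg ltac:(lra) g0 g1) as [z [Hz E]].
  { unfold g in E. apply Rminus_diag_uniq in E. apply I in E.
    destruct (Req_dec z 1) as [->|ne]. lra.
    assert (0 < 1 - z) by lra. nra. }
Qed.

Lemma mono_of_inj (h : R -> R) : (forall x, continuous h x) ->
  (forall x y, h x = h y -> x = y) -> incr h \/ decr h.
Proof.
  intros C I. destruct (Rtotal_order (h 0) (h 1)) as [L|[E|G]].
  - left. intros x y Hxy. destruct (Rtotal_order (h x) (h y)) as [L'|[E|G]].
    + auto.
    + apply I in E; lra.
    + exfalso. apply (ivt_path h 0 x 1 y); auto; lra.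
  - apply I in E. lra.
  - right. intros x y Hxy. destruct (Rtotal_order (h x) (h y)) as [L|[E|G']].
    + exfalso. apply (ivt_path (fun t => - h t) 0 x 1 y); auto.
      intros t. apply (continuous_comp h (fun y => - y)). auto. apply cont_opp.
      intros u v E. apply I. lra. lra. lra. lra.
    + apply I in E; lra.
    + auto.
Qed.

Lemma incr_sign h : h 0 = 0 -> incr h -> forall x, (x < 0 -> h x < 0) /\ (0 < x -> 0 < h x).
Proof. intros H0 M x. split; intros; rewrite <- H0; apply M; auto. Qed.
Lemma decr_sign h : h 0 = 0 -> decr h -> forall x, (x < 0 -> 0 < h x) /\ (0 < x -> h x < 0).
Proof. intros H0 M x. split; intros; rewrite <- H0; apply M; auto. Qed.

Lemma lift_comp h1 e1 h2 e2 : h1 0 = 0 -> h2 0 = 0 -> nz h1 -> nz h2 ->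
  compL (lift h1 e1) (lift h2 e2) = lift (fun x => h1 (h2 x)) (xorb e1 e2).
Proof.
  intros H1 H2 N1 N2. assert (N : nz (fun x => h1 (h2 x))) by (intros x Hx; apply N1, N2; auto).
  apply functional_extensionality. intros [x|]; unfold compL.
  - rewrite !lift_Pt_eq. destruct e1, e2; simpl; rewrite ?lift_vinv by auto; auto.
  - assert (H12 : h1 (h2 0) = 0) by (rewrite H2; auto).
    rewrite (lift_Orig2 h2 e2 H2), (lift_Orig2 (fun x => h1 (h2 x)) _ H12).
    destruct e1, e2; cbn [xorb]; rewrite ?lift_Pt0, ?lift_Orig2 by auto; auto.
Qed.

Lemma lift_id : lift (fun x => x) false = fun p => p.
Proof. apply functional_extensionality. intros [x|]; auto. simpl. apply vinv_0. Qed.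

Lemma CkOn_comp_full k g f : CkOn k g full -> CkOn k f full -> CkOn k (fun x => g (f x)) full.
Proof. intros. apply CkOn_comp with full; auto; apply open_full. Qed.

Lemma CkOn_ext_full k f g : CkOn k g full -> (forall x, f x = g x) -> CkOn k f full.
Proof. intros. apply CkOn_ext with g; auto. apply open_full. Qed.

Lemma Good_comp k a b c h e h' e' : 0 < b ->
  Good k a b h e -> Good k b c h' e' -> Good k a c (fun x => h' (h x)) (xorb e' e).
Proof.
  intros Hb [H0 G] [H0' G']. split. rewrite H0; auto.
  destruct e, e'; destruct G as [G1 G2]; destruct G' as [G1' G2']; simpl.
  - split.
    + apply CkOn_ext_full with (fun x => h' (w (/ b) (w b (h x)))).
      apply (CkOn_comp_full k (fun y => h' (w (/ b) y))); auto.
      intros; rewrite w_inv; auto.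
    + apply (CkOn_comp_full k (fun x => w c (h' x)) (fun y => h (w (/ a) y))); auto.
  - split.
    + apply CkOn_ext_full with (fun x => w c (h' (w (/ b) (w b (h x))))).
      apply (CkOn_comp_full k (fun y => w c (h' (w (/ b) y)))); auto.
      intros; rewrite w_inv; auto.
    + apply (CkOn_comp_full k h' (fun y => h (w (/ a) y))); auto.
  - split.
    + apply (CkOn_comp_full k (fun x => w c (h' x)) h); auto.
    + apply CkOn_ext_full with (fun y => h' (w (/ b) (w b (h (w (/ a) y))))).
      apply (CkOn_comp_full k (fun y => h' (w (/ b) y)) (fun y => w b (h (w (/ a) y)))); auto.
      intros; rewrite w_inv; auto.
  - split.
    + apply (CkOn_comp_full k h' h); auto.
    + apply CkOn_ext_full with (fun y => w c (h' (w (/ b) (w b (h (w (/ a) y)))))).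
      apply (CkOn_comp_full k (fun y => w c (h' (w (/ b) y))) (fun y => w b (h (w (/ a) y)))); auto.
      intros; rewrite w_inv; auto.
Qed.

Lemma Good_id k a : 0 < a -> Good k a a (fun x => x) false.
Proof.
  intros Ha. split; auto. split.
  apply CkOn_id, open_full.
  apply CkOn_ext_full with (fun x => x). apply CkOn_id, open_full. intros; apply w_inv'; auto.
Qed.

Lemma Char_nz k a b f h hi e : Char k a b f h hi e -> nz h /\ nz hi.
Proof.
  intros [_ [HK [KH [[G0 _] [Gi0 _]]]]]. split.
  apply nz_of_inv with hi; auto. apply nz_of_inv with h; auto.
Qed.

Lemma Char_comp k a b c f h hi e g h' hi' e' : 0 < a -> 0 < b -> 0 < c ->
  Char k a b f h hi e -> Char k b c g h' hi' e' ->
  Char k a c (compL g f) (fun x => h' (h x)) (fun x => hi (hi' x)) (xorb e' e).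
Proof.
  intros Ha Hb Hc C1 C2. destruct (Char_nz _ _ _ _ _ _ _ C1) as [N1 N1'].
  destruct (Char_nz _ _ _ _ _ _ _ C2) as [N2 N2'].
  destruct C1 as [-> [HK [KH [G Gi]]]]. destruct C2 as [-> [HK' [KH' [G' Gi']]]].
  split; [|split; [|split; [|split]]].
  - apply lift_comp; auto. apply G'. apply G.
  - intros x. rewrite HK', HK; auto.
  - intros x. rewrite KH, KH'; auto.
  - apply Good_comp with b; auto.
  - replace (xorb e' e) with (xorb e e') by (destruct e, e'; reflexivity). apply Good_comp with b; auto.
Qed.

Lemma Char_inv k a b f h hi e : Char k a b f h hi e -> Char k b a (lift hi e) hi h e.
Proof. intros [_ [HK [KH [G Gi]]]]. repeat split; auto; apply G || apply Gi. Qed.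

Lemma inverse_unique (f g g' : L -> L) : (forall p, g (f p) = p) -> (forall p, f (g' p) = p) -> g = g'.
Proof. intros A B. apply functional_extensionality. intros p. rewrite <- (B p) at 1. auto. Qed.

Definition kb (b : kind) : bool := match b with Fix => false | Ex => true end.
Definition mono (s : sgn) (h : R -> R) : Prop := match s with Plus => incr h | Minus => decr h end.

Lemma Char_mono k a b f h hi e : 0 < b -> Char k a b f h hi e -> incr h \/ decr h.
Proof.
  intros Hb [_ [HK [KH [G _]]]]. apply mono_of_inj. apply Good_cont with k a b e; auto.
  intros x y E. rewrite <- (HK x), <- (HK y), E; auto.
Qed.

Lemma orient_lift s h e : (incr h \/ decr h) -> (orient s (lift h e) <-> mono s h).
Proof.
  intros M. unfold orient, orient_pres, orient_rev, mono. destruct s; split.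
  - intros O. destruct M as [M|M]; auto. exfalso. assert (A := O 1 2 ltac:(lra) ltac:(lra) ltac:(lra)).
    rewrite !val_lift in A. simpl in A. assert (B := M 1 2 ltac:(lra)). lra.
  - intros M' x y _ _ H. rewrite !val_lift. simpl. auto.
  - intros O. destruct M as [M|M]; auto. exfalso. assert (A := O 1 2 ltac:(lra) ltac:(lra) ltac:(lra)).
    rewrite !val_lift in A. simpl in A. assert (B := M 1 2 ltac:(lra)). lra.
  - intros M' x y _ _ H. rewrite !val_lift. simpl. auto.
Qed.

Lemma behaviour_lift b h e : h 0 = 0 -> (behaviour b (lift h e) <-> e = kb b).
Proof.
  intros H0. unfold behaviour, fixes0, exch0. rewrite lift_Pt0, lift_Orig2 by auto.
  destruct b, e; simpl; split; intros; try tauto; try discriminate; destruct H; discriminate.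
Qed.

Lemma DiffSB_iff k a b s bk f : 0 < a -> 0 < b ->
  (DiffSB k (Sa k a) (Sa k b) s bk f <-> exists h hi, Char k a b f h hi (kb bk) /\ mono s h).
Proof.
  intros Ha Hb. split.
  - intros [D [O B]]. apply Diff_char in D as [h [hi [e C]]]; auto.
    assert (M := Char_mono _ _ _ _ _ _ _ Hb C).
    destruct C as [Ef RC]. subst f.
    apply behaviour_lift in B; [|apply RC]. subst e.
    exists h, hi. split. split; auto. apply (orient_lift s h (kb bk) M); auto.
  - intros [h [hi [C Ms]]]. assert (M := Char_mono _ _ _ _ _ _ _ Hb C).
    split. apply Diff_char; auto. exists h, hi, (kb bk); auto.
    destruct C as [-> RC]. split.
    apply orient_lift; auto. apply behaviour_lift. apply RC. auto.
Qed.

Lemma Diff_classify k a b f : 0 < a -> 0 < b -> Diff k (Sa k a) (Sa k b) f ->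
  exists s bk h hi, Char k a b f h hi (kb bk) /\ mono s h.
Proof.
  intros Ha Hb D. apply Diff_char in D as [h [hi [e C]]]; auto.
  assert (M := Char_mono _ _ _ _ _ _ _ Hb C).
  assert (E : exists bk, e = kb bk) by (destruct e; [exists Ex|exists Fix]; auto).
  destruct E as [bk ->].
  destruct M as [M|M]; [exists Plus|exists Minus]; exists bk, h, hi; auto.
Qed.

Lemma smul_mono s1 s2 h1 h2 : mono s1 h1 -> mono s2 h2 ->
  mono (match s1, s2 with Plus, Plus => Plus | Minus, Minus => Plus | _, _ => Minus end)
       (fun x => h2 (h1 x)).
Proof. destruct s1, s2; simpl; unfold incr, decr; intros M1 M2 x y H; auto. Qed.

Lemma mono_inv s h hi : (forall x, hi (h x) = x) -> (forall x, h (hi x) = x) -> mono s h -> mono s hi.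
Proof.
  intros HK KH. destruct s; simpl; unfold incr, decr; intros M x y H.
  - destruct (Rtotal_order (hi x) (hi y)) as [?|[E|G]]; auto.
    + apply (f_equal h) in E. rewrite !KH in E. lra.
    + apply M in G. rewrite !KH in G. lra.
  - destruct (Rtotal_order (hi y) (hi x)) as [?|[E|G]]; auto.
    + apply (f_equal h) in E. rewrite !KH in E. lra.
    + apply M in G. rewrite !KH in G. lra.
Qed.

Lemma deriv_nz (F G : R -> R) x : CnOn 1 F full -> CnOn 1 G full -> (forall y, G (F y) = y) ->
  Derive F x <> 0.
Proof.
  intros CF CG E. assert (XF : ex_derive F x) by (apply (CnOn_ex_derive 0 F full); auto; exact I).
  assert (XG : ex_derive G (F x)) by (apply (CnOn_ex_derive 0 G full); auto; exact I).
  assert (D := Derive_comp G F x XG XF).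
  rewrite (Derive_ext (fun y => G (F y)) (fun y => y)) in D by auto.
  rewrite Derive_id in D. intro Z. rewrite Z in D. lra.
Qed.

Lemma w_ge a x : 0 <= x -> w a x = a * x.
Proof. intros H. destruct (Req_dec x 0) as [->|ne]. rewrite w_0; ring. apply w_gt; lra. Qed.

Lemma w_inv_pos a x : 0 < a -> 0 < x -> w (/ a) x = / a * x.
Proof. intros. apply w_gt; auto. Qed.

Lemma C1_good_fix k a b h : valid_reg k -> Good k a b h false ->
  CnOn 1 h full /\ CnOn 1 (fun y => w b (h (w (/ a) y))) full.
Proof. intros V [_ [G1 G2]]. split; apply CkOn_C1 with k; auto. Qed.

Lemma C1_good_ex k a b h : valid_reg k -> Good k a b h true ->
  CnOn 1 (fun x => w b (h x)) full /\ CnOn 1 (fun y => h (w (/ a) y)) full.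
Proof. intros V [_ [G1 G2]]. split; apply CkOn_C1 with k; auto. Qed.

Lemma lin_cancel c1 r1 c2 r2 D : D <> 0 -> c1 * (r1 ^ 1 * D) = c2 * (r2 ^ 1 * D) -> c1 * r1 = c2 * r2.
Proof.
  intros HD E. simpl in E. apply Rmult_eq_reg_r with D; auto.
  replace (c1 * r1 * D) with (c1 * (r1 * 1 * D)) by ring.
  replace (c2 * r2 * D) with (c2 * (r2 * 1 * D)) by ring. auto.
Qed.

Lemma DL_fix_incr k a b h hi : valid_reg k -> 0 < a -> 0 < b ->
  Good k a b h false -> Good k b a hi false -> (forall x, hi (h x) = x) -> incr h -> a = b.
Proof.
  intros V Ha Hb G Gi HK M. destruct (C1_good_fix _ _ _ _ V G) as [Ch CW].
  destruct (C1_good_fix _ _ _ _ V Gi) as [Chi _].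
  assert (H0 : h 0 = 0) by apply G.
  assert (Dn : Derive_n h 1 0 <> 0) by (apply (deriv_nz h hi); auto).
  assert (L := side_left 1 _ h 1 1 CW Ch).
  assert (R := side_right 1 _ h b (/ a) CW Ch).
  rewrite L in R.
  - apply lin_cancel in R; auto. apply Rmult_eq_reg_r with (/ a).
    rewrite Rinv_r by lra. lra. apply Rinv_neq_0_compat; lra.
  - intros x Hx. rewrite w_inv_pos by auto. destruct (incr_sign h H0 M (/ a * x)) as [_ P].
    rewrite w_gt; auto. apply P. apply Rmult_lt_0_compat; auto. apply Rinv_0_lt_compat; auto.
  - intros x Hx. rewrite (w_le (/ a) x) by lra. destruct (incr_sign h H0 M x) as [P _].
    rewrite w_le by (left; apply P; auto). rewrite !Rmult_1_l. auto.
Qed.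

Lemma DL_fix_decr k a b h hi : valid_reg k -> 0 < a -> 0 < b ->
  Good k a b h false -> Good k b a hi false -> (forall x, hi (h x) = x) -> decr h -> a * b = 1.
Proof.
  intros V Ha Hb G Gi HK M. destruct (C1_good_fix _ _ _ _ V G) as [Ch CW].
  destruct (C1_good_fix _ _ _ _ V Gi) as [Chi _].
  assert (H0 : h 0 = 0) by apply G.
  assert (Dn : Derive_n h 1 0 <> 0) by (apply (deriv_nz h hi); auto).
  assert (L := side_left 1 _ h b 1 CW Ch).
  assert (R := side_right 1 _ h 1 (/ a) CW Ch).
  rewrite L in R.
  - apply lin_cancel in R; auto. rewrite Rmult_1_r, Rmult_1_l in R. rewrite R. field. lra.
  - intros x Hx. rewrite w_inv_pos by auto. destruct (decr_sign h H0 M (/ a * x)) as [_ P].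
    rewrite w_le. ring. left; apply P. apply Rmult_lt_0_compat; auto. apply Rinv_0_lt_compat; auto.
  - intros x Hx. rewrite (w_le (/ a) x) by lra. destruct (decr_sign h H0 M x) as [P _].
    rewrite w_gt by (apply P; auto). rewrite Rmult_1_l. auto.
Qed.

Lemma F2_nz k a b h hi : valid_reg k -> 0 < a -> Good k a b h true -> Good k b a hi true ->
  (forall x, hi (h x) = x) -> Derive_n (fun y => h (w (/ a) y)) 1 0 <> 0.
Proof.
  intros V Ha G Gi HK. destruct (C1_good_ex _ _ _ _ V G) as [_ C2].
  destruct (C1_good_ex _ _ _ _ V Gi) as [G1 _].
  apply (deriv_nz _ (fun x => w a (hi x))); auto. intros y. rewrite HK. apply w_inv'; auto.
Qed.

Lemma DL_ex_incr k a b h hi : valid_reg k -> 0 < a -> 0 < b ->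
  Good k a b h true -> Good k b a hi true -> (forall x, hi (h x) = x) -> incr h -> a * b = 1.
Proof.
  intros V Ha Hb G Gi HK M. destruct (C1_good_ex _ _ _ _ V G) as [C1 C2].
  assert (H0 : h 0 = 0) by apply G.
  assert (Dn := F2_nz k a b h hi V Ha G Gi HK).
  assert (PL : forall x, x < 0 -> w b (h x) = 1 * h (w (/ a) (1 * x))).
  { intros x Hx. rewrite (Rmult_1_l x), (w_le (/ a) x) by lra. destruct (incr_sign h H0 M x) as [P _].
    rewrite w_le by (left; apply P; auto). ring. }
  assert (PR : forall x, 0 < x -> w b (h x) = b * h (w (/ a) (a * x))).
  { intros x Hx. rewrite (w_gt (/ a) (a * x)) by nra. replace (/ a * (a * x)) with x by (field; lra).
    destruct (incr_sign h H0 M x) as [_ P]. rewrite w_gt; auto. }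
  assert (L := side_left 1 _ _ 1 1 C1 C2 PL).
  assert (R := side_right 1 _ _ b a C1 C2 PR).
  rewrite L in R. apply lin_cancel in R; auto. lra.
Qed.

Lemma DL_ex_decr k a b h hi : valid_reg k -> 0 < a -> 0 < b ->
  Good k a b h true -> Good k b a hi true -> (forall x, hi (h x) = x) -> decr h -> a = b.
Proof.
  intros V Ha Hb G Gi HK M. destruct (C1_good_ex _ _ _ _ V G) as [C1 C2].
  assert (H0 : h 0 = 0) by apply G.
  assert (Dn := F2_nz k a b h hi V Ha G Gi HK).
  assert (PL : forall x, x < 0 -> w b (h x) = b * h (w (/ a) (1 * x))).
  { intros x Hx. rewrite (Rmult_1_l x), (w_le (/ a) x) by lra. destruct (decr_sign h H0 M x) as [P _].
    rewrite w_gt by auto. auto. }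
  assert (PR : forall x, 0 < x -> w b (h x) = 1 * h (w (/ a) (a * x))).
  { intros x Hx. rewrite (w_gt (/ a) (a * x)) by nra. replace (/ a * (a * x)) with x by (field; lra).
    destruct (decr_sign h H0 M x) as [_ P]. rewrite w_le by (left; auto). ring. }
  assert (L := side_left 1 _ _ b 1 C1 C2 PL).
  assert (R := side_right 1 _ _ 1 a C1 C2 PR).
  rewrite L in R. apply lin_cancel in R; auto. lra.
Qed.

Lemma pow_neq1 q j : 0 < q -> q <> 1 -> (1 <= j)%nat -> q ^ j <> 1.
Proof.
  intros Hq H1 Hj. destruct (Rtotal_order q 1) as [L|[E|G]].
  - assert (P := pow_lt_1_compat q j ltac:(lra) ltac:(lia)). lra.
  - lra.
  - assert (P := Rlt_pow_R1 q j G ltac:(lia)). lra.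
Qed.

Lemma EK k a h : 0 < a -> a <> 1 -> Good k a a h false -> incr h ->
  forall i, (2 <= i)%nat -> le_reg i k -> Derive_n h i 0 = 0.
Proof.
  intros Ha Ha1 [H0 [G1 G2]] M i Hi Hik.
  assert (Ch := CkOn_elim _ _ _ i G1 Hik). assert (CW := CkOn_elim _ _ _ i G2 Hik).
  assert (PR : forall x, 0 < x -> w a (h (w (/ a) x)) = a * h (/ a * x)).
  { intros x Hx. rewrite w_inv_pos by auto. destruct (incr_sign h H0 M (/ a * x)) as [_ P].
    rewrite w_gt; auto. apply P. apply Rmult_lt_0_compat; auto. apply Rinv_0_lt_compat; auto. }
  assert (PL : forall x, x < 0 -> w a (h (w (/ a) x)) = 1 * h (1 * x)).
  { intros x Hx. rewrite (w_le (/ a) x) by lra. destruct (incr_sign h H0 M x) as [P _].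
    rewrite w_le by (left; apply P; auto). rewrite !Rmult_1_l. auto. }
  assert (L := side_left i _ h 1 1 CW Ch PL).
  assert (R := side_right i _ h a (/ a) CW Ch PR).
  rewrite L in R. rewrite pow1 in R. destruct i as [|j]; [lia|].
  assert (Q : a * (/ a) ^ S j = (/ a) ^ j) by (simpl; field; lra).
  assert (N := pow_neq1 (/ a) j ltac:(apply Rinv_0_lt_compat; auto)
               ltac:(intro E; apply Ha1; rewrite <- (Rinv_inv a), E; apply Rinv_1) ltac:(lia)).
  assert (E : Derive_n h (S j) 0 * (1 - (/ a) ^ j) = 0).
  { rewrite <- Q. replace (Derive_n h (S j) 0 * (1 - a * (/ a) ^ S j))
      with (1 * (1 * Derive_n h (S j) 0) - a * ((/ a) ^ S j * Derive_n h (S j) 0)) by ring.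
    rewrite R. ring. }
  apply Rmult_integral in E as [E|E]; auto. lra.
Qed.

Lemma le_reg_trans i n k : (i <= n)%nat -> le_reg n k -> le_reg i k.
Proof. destruct k; simpl; auto; lia. Qed.

Lemma GL k a h : 0 < a -> CkOn k h full -> h 0 = 0 -> incr h ->
  (forall i, (2 <= i)%nat -> le_reg i k -> Derive_n h i 0 = 0) ->
  CkOn k (fun y => w a (h (w (/ a) y))) full.
Proof.
  intros Ha Ch H0 M Dz. apply CkOn_intro. intros n Hn.
  assert (Chn := CkOn_elim _ _ _ n Ch Hn).
  assert (Hai : 0 < / a) by (apply Rinv_0_lt_compat; auto).
  apply (glue n _ h (fun x => a * h (/ a * x))); auto.
  - apply CnOn_scal. apply open_full.
    apply (CnOn_comp n h (fun x => / a * x) full full); try apply open_full; auto.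
    apply CnOn_scal, CnOn_id; apply open_full.
  - intros i Hi. rewrite Derive_n_scal_l, Derive_n_comp_scal.
    + rewrite Rmult_0_r. destruct i as [|[|i]].
      * simpl. rewrite H0. ring.
      * simpl. field. lra.
      * rewrite Dz; [ring|lia|]. apply le_reg_trans with n; auto.
    + apply filter_forall. intros y m Hm. apply (Chn y I). lia.
  - intros x Hx. rewrite (w_le (/ a) x) by auto. apply w_le.
    destruct (Req_dec x 0) as [->|ne]. rewrite H0; lra.
    left. apply (incr_sign h H0 M x). lra.
  - intros x Hx. rewrite (w_ge (/ a) x) by auto. apply w_ge.
    destruct (Req_dec x 0) as [->|ne]. rewrite Rmult_0_r, H0; lra.
    left. apply (incr_sign h H0 M). apply Rmult_lt_0_compat; lra.
Qed.

Lemma W_deriv_nz k a e einv : valid_reg k -> 0 < a -> CkOn k e full -> CkOn k einv full ->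
  (forall x, einv (e x) = x) -> e 0 = 0 -> incr e ->
  CnOn 1 (fun y => w a (e (w (/ a) y))) full ->
  forall x, Derive (fun y => w a (e (w (/ a) y))) x <> 0.
Proof.
  intros V Ha Ce Ci HK H0 M CW x.
  assert (C1e := CkOn_C1 _ _ _ V Ce). assert (C1i := CkOn_C1 _ _ _ V Ci).
  assert (Hai : 0 < / a) by (apply Rinv_0_lt_compat; auto).
  destruct (Rtotal_order x 0) as [Hx|[->|Hx]].
  - rewrite (Derive_ext_loc _ e).
    + apply (deriv_nz e einv); auto.
    + generalize (locally_lt0 x Hx). apply filter_imp. intros t Ht.
      rewrite (w_le (/ a) t) by lra. apply w_le. left. apply (incr_sign e H0 M t); auto.
  - assert (PL : forall x, x < 0 -> w a (e (w (/ a) x)) = 1 * e (1 * x)).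
    { intros t Ht. rewrite (w_le (/ a) t) by lra. rewrite w_le. rewrite !Rmult_1_l; auto.
      left. apply (incr_sign e H0 M t); auto. }
    assert (L := side_left 1 _ e 1 1 CW C1e PL).
    change (Derive_n (fun y => w a (e (w (/ a) y))) 1 0 <> 0). rewrite L.
    assert (D : Derive_n e 1 0 <> 0) by (apply (deriv_nz e einv); auto).
    rewrite pow_1, !Rmult_1_l. auto.
  - change (Derive_n (fun y => w a (e (w (/ a) y))) 1 x <> 0).
    rewrite (Derive_n_ext_loc _ (fun t => a * e (/ a * t))).
    + rewrite Derive_n_scal_l, Derive_n_comp_scal.
      * assert (Derive e (/ a * x) <> 0) by (apply (deriv_nz e einv); auto).
        change (Derive_n e 1 (/ a * x)) with (Derive e (/ a * x)).
        apply Rmult_integral_contrapositive_currified. lra.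
        apply Rmult_integral_contrapositive_currified; auto. simpl; lra.
      * apply filter_forall. intros y m Hm. apply (C1e y I). auto.
    + generalize (locally_gt0 x Hx). apply filter_imp. intros t Ht.
      rewrite (w_gt (/ a) t) by lra. apply w_gt. apply (incr_sign e H0 M). nra.
Qed.

Lemma Good_inv_E k a e einv : valid_reg k -> 0 < a -> CkOn k e full -> CkOn k einv full ->
  (forall x, einv (e x) = x) -> (forall x, e (einv x) = x) -> e 0 = 0 -> incr e ->
  (forall i, (2 <= i)%nat -> le_reg i k -> Derive_n e i 0 = 0) ->
  Good k a a e false /\ Good k a a einv false.
Proof.
  intros V Ha Ce Ci HK KH H0 M Dz.
  assert (CW := GL k a e Ha Ce H0 M Dz).
  split. split; auto.
  split. rewrite <- H0 at 1. apply HK.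
  split; auto.
  assert (C1W := CkOn_C1 _ _ _ V CW).
  apply CkOn_intro. intros n Hn.
  apply (CnOn_inverse n (fun y => w a (e (w (/ a) y)))).
  - apply CkOn_elim with k; auto.
  - intros x. rewrite w_inv, KH, w_inv'; auto.
  - intros x. rewrite w_inv, HK, w_inv'; auto.
  - intros x. apply (continuous_comp (fun y => einv (w (/ a) y)) (w a)); [|apply w_cont].
    apply (continuous_comp (w (/ a)) einv). apply w_cont. apply (CkOn_cont k einv full); auto. exact I.
  - intros x. apply (CnOn_ex_derive 0 _ full); auto. exact I.
  - apply W_deriv_nz with k einv; auto.
Qed.

Definition smul (s1 s2 : sgn) : sgn :=
  match s1, s2 with Plus, Plus => Plus | Minus, Minus => Plus | _, _ => Minus end.
Definition kx (b1 b2 : kind) : kind :=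
  match b1, b2 with Fix, Fix => Fix | Ex, Ex => Fix | _, _ => Ex end.

Lemma DiffSB_comp k a b c s1 b1 s2 b2 f g : 0 < a -> 0 < b -> 0 < c ->
  DiffSB k (Sa k a) (Sa k b) s1 b1 f -> DiffSB k (Sa k b) (Sa k c) s2 b2 g ->
  DiffSB k (Sa k a) (Sa k c) (smul s1 s2) (kx b1 b2) (compL g f).
Proof.
  intros Ha Hb Hc D1 D2. apply DiffSB_iff in D1 as [h1 [hi1 [C1 M1]]]; auto.
  apply DiffSB_iff in D2 as [h2 [hi2 [C2 M2]]]; auto.
  apply DiffSB_iff; auto. exists (fun x => h2 (h1 x)), (fun x => hi1 (hi2 x)). split.
  - replace (kb (kx b1 b2)) with (xorb (kb b2) (kb b1)) by (destruct b1, b2; reflexivity).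
    apply Char_comp with b; auto.
  - apply (smul_mono s1 s2 h1 h2); auto.
Qed.

Lemma DiffSB_inv k a b s bk f finv : 0 < a -> 0 < b ->
  DiffSB k (Sa k a) (Sa k b) s bk f -> (forall p, finv (f p) = p) -> (forall p, f (finv p) = p) ->
  DiffSB k (Sa k b) (Sa k a) s bk finv.
Proof.
  intros Ha Hb D FI IF. apply DiffSB_iff in D as [h [hi [C M]]]; auto.
  apply DiffSB_iff; auto. exists hi, h. split.
  - assert (C' := Char_inv _ _ _ _ _ _ _ C).
    replace finv with (lift hi (kb bk)); auto.
    destruct C as [-> [HK [KH [G Gi]]]]. destruct (Char_nz _ _ _ _ _ _ _ C') as [_ N].
    symmetry. apply (inverse_unique (lift h (kb bk))); auto.
    apply lift_inv; auto. apply (proj1 Gi).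
  - destruct C as [_ [HK [KH _]]]. apply mono_inv with h; auto.
Qed.

Lemma Diff_inv k S T f finv : Diff k S T f -> (forall p, finv (f p) = p) -> (forall p, f (finv p) = p) ->
  Diff k T S finv.
Proof.
  intros [g [GF [FG [C1 C2]]]] FI IF. replace finv with g.
  exists f. auto. apply (inverse_unique f); auto.
Qed.

Lemma Diff_comp k a b c f g : 0 < a -> 0 < b -> 0 < c ->
  Diff k (Sa k a) (Sa k b) f -> Diff k (Sa k b) (Sa k c) g -> Diff k (Sa k a) (Sa k c) (compL g f).
Proof.
  intros Ha Hb Hc D1 D2. apply Diff_char in D1 as [h1 [hi1 [e1 C1]]]; auto.
  apply Diff_char in D2 as [h2 [hi2 [e2 C2]]]; auto.
  apply Diff_char; auto. do 3 eexists. apply Char_comp with b; eauto.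
Qed.

Lemma DiffSB_Diff k S T s b f : DiffSB k S T s b f -> Diff k S T f.
Proof. intros [D _]; auto. Qed.

Lemma Diff_split k a b f : 0 < a -> 0 < b -> Diff k (Sa k a) (Sa k b) f ->
  exists s bk, DiffSB k (Sa k a) (Sa k b) s bk f.
Proof.
  intros Ha Hb D. destruct (Diff_classify k a b f Ha Hb D) as [s [bk [h [hi [C M]]]]].
  exists s, bk. apply DiffSB_iff; eauto.
Qed.

Lemma DiffSB_excl k S T f : ~ (DiffSB k S T Plus Fix f /\ DiffSB k S T Minus Ex f) /\
  ~ (DiffSB k S T Plus Ex f /\ DiffSB k S T Minus Fix f).
Proof.
  split; intros [[_ [_ B1]] [_ [_ B2]]]; simpl in *; unfold fixes0, exch0 in *;
  destruct B1 as [B1 _], B2 as [B2 _]; rewrite B1 in B2; discriminate.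
Qed.

Lemma Good1 k h e : Good k 1 1 h e <-> h 0 = 0 /\ CkOn k h full.
Proof.
  unfold Good. rewrite Rinv_1. destruct e; split; intros [H0 G]; split; auto.
  - apply CkOn_ext_full with (fun x => w 1 (h x)). apply G. intros; rewrite w_1; auto.
  - split; apply CkOn_ext_full with h; auto; intros; rewrite !w_1; auto.
  - apply G.
  - split; auto. apply CkOn_ext_full with h; auto; intros; rewrite !w_1; auto.
Qed.

Definition sgnZ (e : bool) : Z := if e then (-1)%Z else 1%Z.
Definition eta (f : L -> L) : (R -> R) * Z := (fun x => val (f (Pt x)), sgnZ (is_ex f)).

Lemma is_ex_lift h e : h 0 = 0 -> is_ex (lift h e) = e.
Proof. intros H0. unfold is_ex. rewrite lift_Pt0 by auto. destruct e; auto. Qed.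

Lemma eta_lift h e : h 0 = 0 -> eta (lift h e) = (h, sgnZ e).
Proof.
  intros H0. unfold eta. rewrite is_ex_lift by auto. f_equal.
  apply functional_extensionality; intros x. rewrite val_lift; auto.
Qed.

Lemma Char1 k f h hi e : Char k 1 1 f h hi e <->
  f = lift h e /\ (forall x, hi (h x) = x) /\ (forall x, h (hi x) = x) /\ h 0 = 0 /\
  CkOn k h full /\ CkOn k hi full.
Proof.
  unfold Char. rewrite !Good1. split.
  - intros [E [A [B [[C D] [F G]]]]]. tauto.
  - intros [E [A [B [C [D F]]]]]. repeat split; auto. rewrite <- C at 1. auto.
Qed.

Lemma sgnZ_inj e1 e2 : sgnZ e1 = sgnZ e2 -> e1 = e2.
Proof. destruct e1, e2; simpl; auto; discriminate. Qed.

Lemma lift_inj h1 e1 h2 e2 : h1 0 = 0 -> h2 0 = 0 -> eta (lift h1 e1) = eta (lift h2 e2) ->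
  lift h1 e1 = lift h2 e2.
Proof.
  intros H1 H2 E. rewrite !eta_lift in E by auto. injection E; intros E2 E1.
  apply sgnZ_inj in E2. subst; auto.
Qed.

Lemma part1 k : valid_reg k ->
  exists eta : (L -> L) -> (R -> R) * Z,
     (forall f g, Diff k (Sa k 1) (Sa k 1) f -> Diff k (Sa k 1) (Sa k 1) g ->
        eta (compL f g) =
        (compR (fst (eta f)) (fst (eta g)), (snd (eta f) * snd (eta g))%Z)) /\
     bij_between eta (Diff k (Sa k 1) (Sa k 1))
       (fun hs => Dk k (fst hs) /\ pm1 (snd hs)) /\
     (forall s : sgn,
        bij_between eta (DiffSB k (Sa k 1) (Sa k 1) s Fix)
          (fun hs => Dks k s (fst hs) /\ snd hs = 1%Z) /\
        bij_between eta (DiffSB k (Sa k 1) (Sa k 1) s Ex)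
          (fun hs => Dks k s (fst hs) /\ snd hs = (-1)%Z)).
Proof.
  intros V. assert (H1 : (0 < 1)%R) by lra. exists eta. split; [|split].
  - intros f g Df Dg.
    apply Diff_char in Df as [h1 [hi1 [e1 C1]]]; auto.
    apply Diff_char in Dg as [h2 [hi2 [e2 C2]]]; auto.
    destruct (Char_nz _ _ _ _ _ _ _ C1) as [N1 _]. destruct (Char_nz _ _ _ _ _ _ _ C2) as [N2 _].
    apply Char1 in C1 as [-> [_ [_ [Z1 _]]]]. apply Char1 in C2 as [-> [_ [_ [Z2 _]]]].
    rewrite lift_comp by auto. rewrite !eta_lift by (rewrite ?Z2; auto). simpl.
    unfold compR. f_equal. destruct e1, e2; reflexivity.
  - split; [|split].
    + intros f Df. apply Diff_char in Df as [h [hi [e C]]]; auto.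
      apply Char1 in C as [-> [HK [KH [Z [Ch Chi]]]]]. rewrite eta_lift by auto. simpl.
      split. split; auto. exists hi. auto. destruct e; [right|left]; auto.
    + intros f g Df Dg E.
      apply Diff_char in Df as [h1 [hi1 [e1 C1]]]; auto.
      apply Diff_char in Dg as [h2 [hi2 [e2 C2]]]; auto.
      apply Char1 in C1 as [-> [_ [_ [Z1 _]]]]. apply Char1 in C2 as [-> [_ [_ [Z2 _]]]].
      apply lift_inj; auto.
    + intros [h s] [[Z [hi [HK [KH [Ch Chi]]]]] P]. simpl in *.
      exists (lift h (match s with Z0 => false | Zpos _ => false | Zneg _ => true end)).
      split.
      * apply Diff_char; auto. do 3 eexists. apply Char1. repeat split; eauto.
      * rewrite eta_lift by auto. destruct P as [-> | ->]; reflexivity.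
  - intros s. split; (split; [|split]).
    + intros f Df. apply DiffSB_iff in Df as [h [hi [C M]]]; auto.
      apply Char1 in C as [-> [HK [KH [Z [Ch Chi]]]]]. rewrite eta_lift by auto. simpl.
      split; auto. split. split; auto. exists hi; auto. destruct s; exact M.
    + intros f g Df Dg E.
      apply DiffSB_iff in Df as [h1 [hi1 [C1 _]]]; auto.
      apply DiffSB_iff in Dg as [h2 [hi2 [C2 _]]]; auto.
      apply Char1 in C1 as [-> [_ [_ [Z1 _]]]]. apply Char1 in C2 as [-> [_ [_ [Z2 _]]]].
      apply lift_inj; auto.
    + intros [h s'] [[[Z [hi [HK [KH [Ch Chi]]]]] M] P]. simpl in *. subst s'.
      exists (lift h false). split.
      * apply DiffSB_iff; auto. exists h, hi. split. apply Char1. repeat split; auto.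
        destruct s; exact M.
      * rewrite eta_lift by auto. reflexivity.
    + intros f Df. apply DiffSB_iff in Df as [h [hi [C M]]]; auto.
      apply Char1 in C as [-> [HK [KH [Z [Ch Chi]]]]]. rewrite eta_lift by auto. simpl.
      split; auto. split. split; auto. exists hi; auto. destruct s; exact M.
    + intros f g Df Dg E.
      apply DiffSB_iff in Df as [h1 [hi1 [C1 _]]]; auto.
      apply DiffSB_iff in Dg as [h2 [hi2 [C2 _]]]; auto.
      apply Char1 in C1 as [-> [_ [_ [Z1 _]]]]. apply Char1 in C2 as [-> [_ [_ [Z2 _]]]].
      apply lift_inj; auto.
    + intros [h s'] [[[Z [hi [HK [KH [Ch Chi]]]]] M] P]. simpl in *. subst s'.
      exists (lift h true). split.
      * apply DiffSB_iff; auto. exists h, hi. split. apply Char1. repeat split; auto.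
        destruct s; exact M.
      * rewrite eta_lift by auto. reflexivity.
Qed.

Definition rho (a : R) (x : R) : R := if Rle_dec x 0 then - x / sqrt a else - (sqrt a * x).
Definition pinv (a : R) : L -> L := lift (rho a) true.
Definition phi (f : L -> L) : R -> R := fun x => val (f (Pt x)).

Lemma sqrt_pos' a : 0 < a -> 0 < sqrt a.
Proof. intros. apply sqrt_lt_R0; auto. Qed.

Lemma rho_inv a x : 0 < a -> rho a (rho a x) = x.
Proof.
  intros Ha. assert (Hs := sqrt_pos' a Ha). unfold rho.
  destruct (Rle_dec x 0) as [H1|H1].
  - destruct (Rle_dec (- x / sqrt a) 0) as [H2|H2].
    + assert (x = 0).
      { assert (0 <= - x / sqrt a) by (unfold Rdiv; apply Rmult_le_pos; [lra|left; apply Rinv_0_lt_compat; auto]). 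
        assert (- x / sqrt a = 0) by lra. unfold Rdiv in H0. apply Rmult_integral in H0 as [H0|H0]. lra.
        exfalso. apply (Rinv_neq_0_compat (sqrt a)); lra. }
      subst. field. lra.
    + field. lra.
  - destruct (Rle_dec (- (sqrt a * x)) 0) as [H2|H2].
    + field. lra.
    + exfalso. apply H2. assert (0 < sqrt a * x) by (apply Rmult_lt_0_compat; lra). lra.
Qed.

Lemma rho_0 a : rho a 0 = 0.
Proof. unfold rho. destruct (Rle_dec 0 0); [|lra]. unfold Rdiv. ring. Qed.

Lemma rho_decr a : 0 < a -> decr (rho a).
Proof.
  intros Ha x y H. assert (Hs := sqrt_pos' a Ha). assert (Hi : 0 < / sqrt a) by (apply Rinv_0_lt_compat; auto).
  unfold rho. unfold Rdiv.
  destruct (Rle_dec x 0), (Rle_dec y 0); nra.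
Qed.

Lemma Good_rho k a : 0 < a -> Good k a a (rho a) true.
Proof.
  intros Ha. assert (Hs := sqrt_pos' a Ha). assert (Ea := sqrt_sqrt a (Rlt_le _ _ Ha)).
  split. apply rho_0. split.
  - apply CkOn_ext_full with (fun x => (- sqrt a) * x). apply CkOn_linear, open_full.
    intros x. unfold rho. destruct (Rle_dec x 0).
    + rewrite w_ge. rewrite <- Ea at 1. field. lra.
      unfold Rdiv. apply Rmult_le_pos. lra. left; apply Rinv_0_lt_compat; auto.
    + rewrite w_le. ring. assert (0 < sqrt a * x) by (apply Rmult_lt_0_compat; lra). lra.
  - apply CkOn_ext_full with (fun y => (- / sqrt a) * y). apply CkOn_linear, open_full.
    intros y. destruct (Rle_dec y 0).
    + rewrite w_le by auto. unfold rho. destruct (Rle_dec y 0); [|lra]. field. lra.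
    + rewrite w_gt by lra. unfold rho. destruct (Rle_dec (/ a * y) 0) as [H|H].
      * exfalso. assert (0 < / a * y) by (apply Rmult_lt_0_compat; [apply Rinv_0_lt_compat|]; lra). lra.
      * rewrite <- Ea at 2. field. lra.
Qed.

Lemma Char_p k a : 0 < a -> Char k a a (pinv a) (rho a) (rho a) true.
Proof.
  intros Ha. split; auto. split. intros; apply rho_inv; auto. split. intros; apply rho_inv; auto.
  split; apply Good_rho; auto.
Qed.

Lemma p_DiffSB k a : 0 < a -> DiffSB k (Sa k a) (Sa k a) Minus Ex (pinv a).
Proof.
  intros Ha. apply DiffSB_iff; auto. exists (rho a), (rho a). split. apply Char_p; auto.
  apply rho_decr; auto.
Qed.

Lemma nz_rho a : 0 < a -> nz (rho a).
Proof. intros Ha. apply nz_of_inv with (rho a). intros; apply rho_inv; auto. apply rho_0. Qed.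

Lemma pp a : 0 < a -> forall q, pinv a (pinv a q) = q.
Proof.
  intros Ha q. change (compL (pinv a) (pinv a) q = q). unfold pinv.
  rewrite lift_comp; try apply rho_0; try apply nz_rho; auto. simpl.
  replace (fun x => rho a (rho a x)) with (fun x : R => x).
  rewrite lift_id. auto. apply functional_extensionality; intros; rewrite rho_inv; auto.
Qed.

Lemma p_Pt0 a : pinv a (Pt 0) = Orig2.
Proof. unfold pinv. rewrite lift_Pt0; auto. apply rho_0. Qed.

Lemma phi_lift h e : phi (lift h e) = h.
Proof. apply functional_extensionality. intros x. unfold phi. rewrite val_lift. auto. Qed.

Lemma L2a k a f : valid_reg k -> 0 < a -> a <> 1 -> ~ DiffSB k (Sa k a) (Sa k a) Plus Ex f.
Proof.
  intros V Ha Ha1 D. apply DiffSB_iff in D as [h [hi [[_ [HK [_ [G Gi]]]] M]]]; auto.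
  assert (E := DL_ex_incr k a a h hi V Ha Ha G Gi HK M). apply Ha1. nra.
Qed.

Lemma L2b k a f : valid_reg k -> 0 < a -> a <> 1 -> ~ DiffSB k (Sa k a) (Sa k a) Minus Fix f.
Proof.
  intros V Ha Ha1 D. apply DiffSB_iff in D as [h [hi [[_ [HK [_ [G Gi]]]] M]]]; auto.
  assert (E := DL_fix_decr k a a h hi V Ha Ha G Gi HK M). apply Ha1. nra.
Qed.

Lemma L2c k a f : valid_reg k -> 0 < a -> a <> 1 ->
  (Diff k (Sa k a) (Sa k a) f <-> DiffSB k (Sa k a) (Sa k a) Plus Fix f \/ DiffSB k (Sa k a) (Sa k a) Minus Ex f).
Proof.
  intros V Ha Ha1. split.
  - intros D. destruct (Diff_split k a a f Ha Ha D) as [s [bk D']].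
    destruct s, bk; auto.
    + exfalso; apply (L2a k a f); auto.
    + exfalso; apply (L2b k a f); auto.
  - intros [D|D]; apply DiffSB_Diff in D; auto.
Qed.

Lemma L2_maps k a f : valid_reg k -> 0 < a -> a <> 1 ->
  DiffSB k (Sa k a) (Sa k a) Plus Fix f -> Ekp k (phi f).
Proof.
  intros V Ha Ha1 D. apply DiffSB_iff in D as [h [hi [C M]]]; auto.
  assert (G := proj1 (proj2 (proj2 (proj2 C)))). assert (Gi := proj2 (proj2 (proj2 (proj2 C)))).
  destruct C as [-> [HK [KH _]]]. rewrite phi_lift.
  split. split. split. apply G. exists hi. split; auto. split; auto. split. apply G. apply Gi.
  exact M. apply EK with a; auto.
Qed.

Lemma L2_surj k a e : valid_reg k -> 0 < a -> Ekp k e ->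
  DiffSB k (Sa k a) (Sa k a) Plus Fix (lift e false).
Proof.
  intros V Ha [[[H0 [einv [HK [KH [Ce Ci]]]]] M] Dz].
  destruct (Good_inv_E k a e einv V Ha Ce Ci HK KH H0 M Dz) as [G Gi].
  apply DiffSB_iff; auto. exists e, einv. split; auto.
  split; [|split; [|split; [|split]]]; auto.
Qed.

Lemma L2_lift k a f : 0 < a -> Diff k (Sa k a) (Sa k a) f -> exists h e, f = lift h e /\ h 0 = 0.
Proof.
  intros Ha D. apply Diff_char in D as [h [hi [e [E [_ [_ [G _]]]]]]]; auto.
  exists h, e. split; auto. apply G.
Qed.

Lemma L2_norm k a f finv n : 0 < a -> Diff k (Sa k a) (Sa k a) f ->
  (forall x, finv (f x) = x) -> (forall x, f (finv x) = x) ->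
  DiffSB k (Sa k a) (Sa k a) Plus Fix n -> DiffSB k (Sa k a) (Sa k a) Plus Fix (compL f (compL n finv)).
Proof.
  intros Ha D FI IF Dn. destruct (Diff_split k a a f Ha Ha D) as [s [bk Df]].
  assert (Di := DiffSB_inv k a a s bk f finv Ha Ha Df FI IF).
  assert (D1 := DiffSB_comp k a a a s bk Plus Fix finv n Ha Ha Ha Di Dn).
  assert (D2 := DiffSB_comp k a a a _ _ s bk _ f Ha Ha Ha D1 Df).
  destruct s, bk; exact D2.
Qed.

Definition Psi (a : R) (f : L -> L) : (R -> R) * Z :=
  (fun x => val (f (if is_ex f then pinv a (Pt x) else Pt x)), sgnZ (is_ex f)).
Definition sigma (a : R) (e : R -> R) : R -> R := fun x => rho a (e (rho a x)).

Lemma Psi_lift a h e : h 0 = 0 -> Psi a (lift h e) = ((if e then fun x => h (rho a x) else h), sgnZ e).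
Proof.
  intros H0. unfold Psi. rewrite is_ex_lift by auto. f_equal.
  apply functional_extensionality; intros x. destruct e; rewrite val_lift; auto.
  unfold pinv. rewrite val_lift. auto.
Qed.

Lemma comp_p_minus k a f : 0 < a -> DiffSB k (Sa k a) (Sa k a) Minus Ex f ->
  DiffSB k (Sa k a) (Sa k a) Plus Fix (compL f (pinv a)).
Proof.
  intros Ha D. exact (DiffSB_comp k a a a Minus Ex Minus Ex _ _ Ha Ha Ha (p_DiffSB k a Ha) D).
Qed.

Lemma part2 k : valid_reg k ->
  (forall a, 0 < a -> a <> 1 ->
     let S := Sa k a in
     (forall f, ~ DiffSB k S S Plus Ex f) /\
     (forall f, ~ DiffSB k S S Minus Fix f) /\
     (forall f, Diff k S S f <-> DiffSB k S S Plus Fix f \/ DiffSB k S S Minus Ex f) /\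
     (forall f, ~ (DiffSB k S S Plus Fix f /\ DiffSB k S S Minus Ex f)) /\
     (exists phi : (L -> L) -> (R -> R),
        (forall f g, DiffSB k S S Plus Fix f -> DiffSB k S S Plus Fix g ->
           phi (compL f g) = compR (phi f) (phi g)) /\
        bij_between phi (DiffSB k S S Plus Fix) (Ekp k)) /\
     (exists p : L -> L,
        DiffSB k S S Minus Ex p /\
        (forall x, p (p x) = x) /\ p <> (fun x => x) /\
        (forall f finv n, Diff k S S f ->
           (forall x, finv (f x) = x) -> (forall x, f (finv x) = x) ->
           DiffSB k S S Plus Fix n -> DiffSB k S S Plus Fix (compL f (compL n finv))) /\
        (forall f, Diff k S S f ->
           exists n e, DiffSB k S S Plus Fix n /\ (e = (fun x => x) \/ e = p) /\
                       f = compL n e) /\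
        (forall n1 e1 n2 e2,
           DiffSB k S S Plus Fix n1 -> (e1 = (fun x => x) \/ e1 = p) ->
           DiffSB k S S Plus Fix n2 -> (e2 = (fun x => x) \/ e2 = p) ->
           compL n1 e1 = compL n2 e2 -> n1 = n2 /\ e1 = e2)) /\
     (exists (sigma : (R -> R) -> (R -> R)) (Psi : (L -> L) -> (R -> R) * Z),
        (forall e, Ekp k e -> Ekp k (sigma e)) /\
        (forall e1 e2, Ekp k e1 -> Ekp k e2 ->
           sigma (compR e1 e2) = compR (sigma e1) (sigma e2)) /\
        (forall e, Ekp k e -> sigma (sigma e) = e) /\
        (forall f g, Diff k S S f -> Diff k S S g ->
           Psi (compL f g) =
           (compR (fst (Psi f))
              (if Z.eq_dec (snd (Psi f)) 1%Z then fst (Psi g) else sigma (fst (Psi g))),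
            (snd (Psi f) * snd (Psi g))%Z)) /\
        bij_between Psi (Diff k S S) (fun es => Ekp k (fst es) /\ pm1 (snd es)))).
Proof.
  intros V a Ha Ha1 S. unfold S; clear S.
  assert (PH : forall f, DiffSB k (Sa k a) (Sa k a) Plus Fix f -> exists h, f = lift h false /\ h 0 = 0).
  { intros f D. apply DiffSB_iff in D as [h [hi [[E [_ [_ [G _]]]] _]]]; auto. exists h. split; auto. apply G. }
  assert (PM : forall f, DiffSB k (Sa k a) (Sa k a) Minus Ex f -> exists h, f = lift h true /\ h 0 = 0).
  { intros f D. apply DiffSB_iff in D as [h [hi [[E [_ [_ [G _]]]] _]]]; auto. exists h. split; auto. apply G. }
  assert (Hrho : forall x, rho a (rho a x) = x) by (intros; apply rho_inv; auto).
  split; [intros f; apply L2a; auto|].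
  split; [intros f; apply L2b; auto|].
  split; [intros f; apply L2c; auto|].
  split; [intros f; apply DiffSB_excl|].
  split; [|split].
  -
    exists phi. split.
    + intros f g Df Dg. destruct (PH f Df) as [h1 [-> Z1]]. destruct (PH g Dg) as [h2 [-> Z2]].
      unfold compR. apply functional_extensionality; intros x. unfold phi, compL.
      rewrite !val_lift. auto.
    + split; [|split].
      * intros f Df. apply L2_maps with a; auto.
      * intros f g Df Dg E. destruct (PH f Df) as [h1 [-> Z1]]. destruct (PH g Dg) as [h2 [-> Z2]].
        rewrite !phi_lift in E. subst; auto.
      * intros e Ee. exists (lift e false). split. apply L2_surj; auto. apply phi_lift.
  -
    exists (pinv a). split; [apply p_DiffSB; auto|]. split; [apply pp; auto|].
    split; [|split; [|split]].
    + intros E. assert (E' := f_equal (fun F => F (Pt 0)) E). cbv beta in E'. rewrite p_Pt0 in E'. discriminate.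
    + intros f finv n D FI IF Dn. apply L2_norm; auto.
    + intros f D. apply L2c in D as [D|D]; auto.
      * exists f, (fun x => x). split; auto.
      * exists (compL f (pinv a)), (pinv a). split. apply comp_p_minus; auto. split; auto.
        apply functional_extensionality; intros q. unfold compL. rewrite pp; auto.
    + intros n1 e1 n2 e2 D1 He1 D2 He2 E.
      destruct D1 as [_ [_ [F1 F1']]]. destruct D2 as [_ [_ [F2 F2']]].
      assert (Ee : e1 = e2).
      { assert (E' := f_equal (fun F => F (Pt 0)) E). unfold compL in E'.
        destruct He1 as [-> | ->], He2 as [-> | ->]; auto; rewrite ?p_Pt0 in E';
        rewrite ?F1, ?F2, ?F1', ?F2' in E'; discriminate. }
      subst e2. split; auto.
      assert (II : forall q, e1 (e1 q) = q) by (destruct He1 as [-> | ->]; auto; apply pp; auto).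
      apply functional_extensionality; intros q. rewrite <- (II q).
      change (compL n1 e1 (e1 q) = compL n2 e1 (e1 q)). rewrite E; auto.
  -
    exists (sigma a), (Psi a). split; [|split; [|split; [|split]]].
    + intros e Ee. assert (D := L2_surj k a e V Ha Ee).
      assert (D' := L2_norm k a (pinv a) (pinv a) (lift e false) Ha
                      (DiffSB_Diff _ _ _ _ _ _ (p_DiffSB k a Ha)) (pp a Ha) (pp a Ha) D).
      apply L2_maps in D'; auto.
      replace (sigma a e) with (phi (compL (pinv a) (compL (lift e false) (pinv a)))); auto.
      apply functional_extensionality; intros x. unfold phi, compL, sigma, pinv. rewrite !val_lift. auto.
    + intros e1 e2 _ _. unfold sigma, compR. apply functional_extensionality; intros x.
      rewrite Hrho. auto.
    + intros e _. unfold sigma. apply functional_extensionality; intros x. rewrite !Hrho. auto.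
    + intros f g Df Dg.
      destruct (L2_lift k a f Ha Df) as [h1 [e1 [-> Z1]]].
      destruct (L2_lift k a g Ha Dg) as [h2 [e2 [-> Z2]]].
      apply Diff_char in Df as [h1' [hi1 [e1' C1]]]; auto.
      apply Diff_char in Dg as [h2' [hi2 [e2' C2]]]; auto.
      assert (N1 : nz h1).
      { destruct C1 as [E [HK [KH [G Gi]]]]. assert (h1 = h1').
        { rewrite <- (phi_lift h1 e1), E, phi_lift. auto. } subst. apply nz_of_inv with hi1; auto. apply Gi. }
      assert (N2 : nz h2).
      { destruct C2 as [E [HK [KH [G Gi]]]]. assert (h2 = h2').
        { rewrite <- (phi_lift h2 e2), E, phi_lift. auto. } subst. apply nz_of_inv with hi2; auto. apply Gi. }
      rewrite lift_comp by auto. rewrite !Psi_lift by (rewrite ?Z2; auto). simpl.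
      destruct e1, e2; simpl; f_equal; unfold compR, sigma; apply functional_extensionality; intros x; rewrite ?Hrho; auto.
    + split; [|split].
      * intros f Df. apply L2c in Df as [D|D]; auto.
        -- destruct (PH f D) as [h [-> Z]]. rewrite Psi_lift by auto. simpl. split.
           rewrite <- (phi_lift h false). apply (L2_maps k a); auto. left; auto.
        -- destruct (PM f D) as [h [-> Z]]. rewrite Psi_lift by auto. simpl. split.
           assert (D' := comp_p_minus k a _ Ha D). apply L2_maps in D'; auto.
           replace (fun x => h (rho a x)) with (phi (compL (lift h true) (pinv a))); auto.
           apply functional_extensionality; intros x. unfold phi, compL, pinv. rewrite !val_lift. auto.
           right; auto.
      * intros f g Df Dg E.
        destruct (L2_lift k a f Ha Df) as [h1 [e1 [-> Z1]]].
        destruct (L2_lift k a g Ha Dg) as [h2 [e2 [-> Z2]]].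
        rewrite !Psi_lift in E by auto. injection E; intros E2 E1. apply sgnZ_inj in E2. subst e2.
        f_equal. destruct e1; auto.
        apply functional_extensionality; intros x. rewrite <- (Hrho x).
        exact (f_equal (fun F => F (rho a x)) E1).
      * intros [e s] [Ee P]. simpl in *. destruct P as [-> | ->].
        -- exists (lift e false). split. apply DiffSB_Diff with Plus Fix. apply L2_surj; auto.
           rewrite Psi_lift. auto. apply Ee.
        -- exists (compL (lift e false) (pinv a)). split.
           ++ apply Diff_comp with a; auto. apply DiffSB_Diff with Minus Ex. apply p_DiffSB; auto.
              apply DiffSB_Diff with Plus Fix. apply L2_surj; auto.
           ++ assert (Z : e 0 = 0) by apply Ee.
              assert (Ne : nz e).
              { destruct Ee as [[[_ [einv [HK [KH _]]]] _] _]. apply nz_of_inv with einv; auto.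
                rewrite <- Z at 1. auto. }
              unfold pinv. rewrite lift_comp; auto; try apply rho_0; try apply nz_rho; auto.
              rewrite Psi_lift. simpl. f_equal. apply functional_extensionality; intros x. rewrite Hrho. auto.
              rewrite rho_0. auto.
Qed.

Lemma Good_neg k a b : 0 < a -> 0 < b -> a * b = 1 -> Good k a b (fun x => - x) false.
Proof.
  intros Ha Hb Hab. assert (Eb : b = / a).
  { apply Rmult_eq_reg_l with a; [|lra]. rewrite Rinv_r; lra. }
  split. ring. split.
  - apply CkOn_ext_full with (fun x => (-1) * x). apply CkOn_linear, open_full. intros; ring.
  - apply CkOn_ext_full with (fun y => (- b) * y). apply CkOn_linear, open_full.
    intros y. destruct (Rle_dec y 0).
    + rewrite (w_le (/ a) y) by auto. rewrite w_ge by lra. ring.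
    + rewrite (w_gt (/ a) y) by lra. rewrite w_le. rewrite Eb. ring.
      assert (0 < / a * y) by (apply Rmult_lt_0_compat; [apply Rinv_0_lt_compat|]; lra). lra.
Qed.

Lemma part3 k : valid_reg k ->
  (forall a, 0 < a -> a <> 1 ->
     let S := Sa k a in let T := Sa k (1 / a) in
     (exists f, Diff k S T f) /\
     (forall f, ~ DiffSB k S T Plus Fix f) /\
     (forall f, ~ DiffSB k S T Minus Ex f) /\
     (forall f, Diff k S T f <-> DiffSB k S T Plus Ex f \/ DiffSB k S T Minus Fix f) /\
     (forall f, ~ (DiffSB k S T Plus Ex f /\ DiffSB k S T Minus Fix f)) /\
     (forall h g ginv,
        DiffSB k S T Minus Fix h -> DiffSB k S T Plus Ex g ->
        (forall x, ginv (g x) = x) -> (forall x, g (ginv x) = x) ->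
        bij_between (fun kappa => compL ginv kappa)
          (DiffSB k S T Plus Ex) (DiffSB k S S Plus Fix) /\
        bij_between (fun kappa => compL h kappa)
          (DiffSB k S S Plus Fix) (DiffSB k S T Minus Fix))).
Proof.
  intros V a Ha Ha1 S T. unfold S, T; clear S T.
  set (b := 1 / a). assert (Hb : 0 < b) by (unfold b; unfold Rdiv; rewrite Rmult_1_l; apply Rinv_0_lt_compat; auto).
  assert (Hab : a * b = 1) by (unfold b; field; lra).
  assert (NPF : forall f, ~ DiffSB k (Sa k a) (Sa k b) Plus Fix f).
  { intros f D. apply DiffSB_iff in D as [h [hi [[_ [HK [_ [G Gi]]]] M]]]; auto.
    assert (E := DL_fix_incr k a b h hi V Ha Hb G Gi HK M). subst b. apply Ha1.
    rewrite <- E in Hab. nra. }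
  assert (NME : forall f, ~ DiffSB k (Sa k a) (Sa k b) Minus Ex f).
  { intros f D. apply DiffSB_iff in D as [h [hi [[_ [HK [_ [G Gi]]]] M]]]; auto.
    assert (E := DL_ex_decr k a b h hi V Ha Hb G Gi HK M). apply Ha1.
    rewrite <- E in Hab. nra. }
  split; [|split; [|split; [|split; [|split]]]]; auto.
  - exists (lift (fun x => - x) false). apply Diff_char; auto.
    exists (fun x => - x), (fun x => - x), false. split; auto. split. intros; ring. split. intros; ring.
    split; apply Good_neg; auto. rewrite Rmult_comm; auto.
  - intros f. split.
    + intros D. destruct (Diff_split k a b f Ha Hb D) as [s [bk D']].
      destruct s, bk; auto; exfalso; [apply (NPF f)|apply (NME f)]; auto.
    + intros [D|D]; apply DiffSB_Diff in D; auto.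
  - intros f. apply DiffSB_excl.
  - intros h g ginv Dh Dg GI IG.
    assert (Dgi := DiffSB_inv k a b Plus Ex g ginv Ha Hb Dg GI IG).
    split; (split; [|split]).
    + intros kap D. exact (DiffSB_comp k a b a Plus Ex Plus Ex _ _ Ha Hb Ha D Dgi).
    + intros k1 k2 _ _ E. apply functional_extensionality; intros q.
      rewrite <- (IG (k1 q)), <- (IG (k2 q)). exact (f_equal (fun F => g (F q)) E).
    + intros n Dn. exists (compL g n). split.
      exact (DiffSB_comp k a a b Plus Fix Plus Ex _ _ Ha Ha Hb Dn Dg).
      apply functional_extensionality; intros q. unfold compL. auto.
    + intros kap D. exact (DiffSB_comp k a a b Plus Fix Minus Fix _ _ Ha Ha Hb D Dh).
    + intros k1 k2 _ _ E. destruct Dh as [[hi [HI _]] _].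
      apply functional_extensionality; intros q.
      rewrite <- (HI (k1 q)), <- (HI (k2 q)). exact (f_equal (fun F => hi (F q)) E).
    + intros m Dm. destruct (proj1 Dh) as [hi [HI [IH _]]].
      assert (Dhi := DiffSB_inv k a b Minus Fix h hi Ha Hb Dh HI IH).
      exists (compL hi m). split.
      exact (DiffSB_comp k a b a Minus Fix Minus Fix _ _ Ha Hb Ha Dm Dhi).
      apply functional_extensionality; intros q. unfold compL. auto.
Qed.

Lemma part4 k : valid_reg k ->
  (forall a b, 0 < a -> 0 < b -> a <> b -> a <> 1 / b ->
     forall f, ~ Diff k (Sa k a) (Sa k b) f).
Proof.
  intros V a b Ha Hb Hne Hinv f D.
  assert (Hab : a * b <> 1).
  { intro E. apply Hinv. apply Rmult_eq_reg_r with b; [|lra]. rewrite E. field. lra. }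
  destruct (Diff_split k a b f Ha Hb D) as [s [bk D']].
  apply DiffSB_iff in D' as [h [hi [[_ [HK [_ [G Gi]]]] M]]]; auto.
  destruct s, bk; simpl in *.
  - apply Hne. apply (DL_fix_incr k a b h hi); auto.
  - apply Hab. apply (DL_ex_incr k a b h hi); auto.
  - apply Hab. apply (DL_fix_decr k a b h hi); auto.
  - apply Hne. apply (DL_ex_decr k a b h hi); auto.
Qed.

Lemma part5 k : valid_reg k ->
  (exists F : R -> (chart -> Prop),
     (forall x, is_structure k (F x)) /\
     (forall x y, x <> y -> forall f, ~ Diff k (F x) (F y) f)).
Proof.
  intros V. exists (fun x => Sa k (2 + exp x)). split.
  - intros x. exists (special_atlas (w (2 + exp x))). split.
    apply atlas_a. assert (0 < exp x) by apply exp_pos. lra.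
    intros c; reflexivity.
  - intros x y Hxy f. assert (0 < exp x) by apply exp_pos. assert (0 < exp y) by apply exp_pos.
    apply part4; auto; try lra.
    + intros E. apply Hxy. apply exp_inv. lra.
    + intros E. assert (1 / (2 + exp y) < 1).
      { apply (Rmult_lt_reg_r (2 + exp y)). lra. field_simplify; lra. }
      lra.
Qed.

Theorem theorem1p7 (k : reg) (hk : valid_reg k) :
  (* (1) a = 1 *)
  (exists eta : (L -> L) -> (R -> R) * Z,
     (forall f g, Diff k (Sa k 1) (Sa k 1) f -> Diff k (Sa k 1) (Sa k 1) g ->
        eta (compL f g) =
        (compR (fst (eta f)) (fst (eta g)), (snd (eta f) * snd (eta g))%Z)) /\
     bij_between eta (Diff k (Sa k 1) (Sa k 1))
       (fun hs => Dk k (fst hs) /\ pm1 (snd hs)) /\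
     (forall s : sgn,
        bij_between eta (DiffSB k (Sa k 1) (Sa k 1) s Fix)
          (fun hs => Dks k s (fst hs) /\ snd hs = 1%Z) /\
        bij_between eta (DiffSB k (Sa k 1) (Sa k 1) s Ex)
          (fun hs => Dks k s (fst hs) /\ snd hs = (-1)%Z))) /\
  (* (2) a <> 1 : automorphisms *)
  (forall a, 0 < a -> a <> 1 ->
     let S := Sa k a in
     (forall f, ~ DiffSB k S S Plus Ex f) /\
     (forall f, ~ DiffSB k S S Minus Fix f) /\
     (forall f, Diff k S S f <-> DiffSB k S S Plus Fix f \/ DiffSB k S S Minus Ex f) /\
     (forall f, ~ (DiffSB k S S Plus Fix f /\ DiffSB k S S Minus Ex f)) /\
     (exists phi : (L -> L) -> (R -> R),
        (forall f g, DiffSB k S S Plus Fix f -> DiffSB k S S Plus Fix g ->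
           phi (compL f g) = compR (phi f) (phi g)) /\
        bij_between phi (DiffSB k S S Plus Fix) (Ekp k)) /\
     (exists p : L -> L,
        DiffSB k S S Minus Ex p /\
        (forall x, p (p x) = x) /\ p <> (fun x => x) /\
        (* Diff^{+,fix}(S) is normal in Diff(S) *)
        (forall f finv n, Diff k S S f ->
           (forall x, finv (f x) = x) -> (forall x, f (finv x) = x) ->
           DiffSB k S S Plus Fix n -> DiffSB k S S Plus Fix (compL f (compL n finv))) /\
        (* <p> is a complement: Diff(S) = Diff^{+,fix}(S) ⋊ <p> *)
        (forall f, Diff k S S f ->
           exists n e, DiffSB k S S Plus Fix n /\ (e = (fun x => x) \/ e = p) /\
                       f = compL n e) /\
        (forall n1 e1 n2 e2,
           DiffSB k S S Plus Fix n1 -> (e1 = (fun x => x) \/ e1 = p) ->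
           DiffSB k S S Plus Fix n2 -> (e2 = (fun x => x) \/ e2 = p) ->
           compL n1 e1 = compL n2 e2 -> n1 = n2 /\ e1 = e2)) /\
     (* Diff(S) is isomorphic to a semidirect product E^{k,+} ⋊_sigma Z_2 *)
     (exists (sigma : (R -> R) -> (R -> R)) (Psi : (L -> L) -> (R -> R) * Z),
        (forall e, Ekp k e -> Ekp k (sigma e)) /\
        (forall e1 e2, Ekp k e1 -> Ekp k e2 ->
           sigma (compR e1 e2) = compR (sigma e1) (sigma e2)) /\
        (forall e, Ekp k e -> sigma (sigma e) = e) /\
        (forall f g, Diff k S S f -> Diff k S S g ->
           Psi (compL f g) =
           (compR (fst (Psi f))
              (if Z.eq_dec (snd (Psi f)) 1%Z then fst (Psi g) else sigma (fst (Psi g))),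
            (snd (Psi f) * snd (Psi g))%Z)) /\
        bij_between Psi (Diff k S S) (fun es => Ekp k (fst es) /\ pm1 (snd es)))) /\
  (* (3) S_a vs S_{1/a} *)
  (forall a, 0 < a -> a <> 1 ->
     let S := Sa k a in let T := Sa k (1 / a) in
     (exists f, Diff k S T f) /\
     (forall f, ~ DiffSB k S T Plus Fix f) /\
     (forall f, ~ DiffSB k S T Minus Ex f) /\
     (forall f, Diff k S T f <-> DiffSB k S T Plus Ex f \/ DiffSB k S T Minus Fix f) /\
     (forall f, ~ (DiffSB k S T Plus Ex f /\ DiffSB k S T Minus Fix f)) /\
     (forall h g ginv,
        DiffSB k S T Minus Fix h -> DiffSB k S T Plus Ex g ->
        (forall x, ginv (g x) = x) -> (forall x, g (ginv x) = x) ->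
        bij_between (fun kappa => compL ginv kappa)
          (DiffSB k S T Plus Ex) (DiffSB k S S Plus Fix) /\
        bij_between (fun kappa => compL h kappa)
          (DiffSB k S S Plus Fix) (DiffSB k S T Minus Fix))) /\
  (* (4) *)
  (forall a b, 0 < a -> 0 < b -> a <> b -> a <> 1 / b ->
     forall f, ~ Diff k (Sa k a) (Sa k b) f) /\
  (* uncountably many pairwise non-diffeomorphic C^k-structures *)
  (exists F : R -> (chart -> Prop),
     (forall x, is_structure k (F x)) /\
     (forall x y, x <> y -> forall f, ~ Diff k (F x) (F y) f)).
Proof.
  split; [apply part1; auto|].
  split; [apply part2; auto|].
  split; [apply part3; auto|].
  split; [apply part4; auto|].
  apply part5; auto.
Qed.
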